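(* The groups $L^i_r$ ($i\in\{1,2,3,4,6\}$, $r\in\mathbb N_{>0}$) and $L^{j,+}_r$ ($j\in\{2,3,4\}$, $r$ as required in their definition) are pairwise non-isomorphic discrete oscillator groups, and every discrete oscillator group is isomorphic to one of them. More precisely, let $L=H_1^r(\mathbb Z)\rtimes_S\mathbb Z\delta$ be a discrete oscillator group with $\bar S=(s_{ij})\in\{S_1,S_2,S_3,S_4,S_6\}$, $S(\alpha)=\alpha^{s_{11}}\beta^{s_{21}}\gamma^k$, $S(\beta)=\alpha^{s_{12}}\beta^{s_{22}}\gamma^l$, $S(\gamma)=\gamma$. Then: (i) if $\bar S=I_2$, $L\cong L^1_{r_0}$ with $r_0=\gcd(r,k,l)$; (ii) if $\bar S=-I_2$, $L\cong L^2_r$ if $r$ is odd or $k$ and $l$ are both even, and $L\cong L^{2,+}_r$ otherwise; (iii) if $\bar S=S_3$, $L\cong L^3_r$ if $3\nmid r$ or $k\equiv l\bmod 3$, and $L\cong L^{3,+}_r$ otherwise; (iv) if $\bar S=S_4$, $L\cong L^4_r$ if $r$ is odd or $k\equiv l\bmod 2$, and $L\cong L^{4,+}_r$ otherwise; (v) if $\bar S=S_6$, $L\cong L^6_r$.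
   Context: For $r\in\mathbb N_{>0}$ the discrete Heisenberg group is $H_1^r(\mathbb Z)=\langle\alpha,\beta,\gamma\mid \alpha\beta\alpha^{-1}\beta^{-1}=\gamma^r,\ \alpha\gamma=\gamma\alpha,\ \beta\gamma=\gamma\beta\rangle$. A discrete oscillator group is a semidirect product $H_1^r(\mathbb Z)\rtimes_S\mathbb Z\delta$ where $\delta$ acts by an automorphism $S$ ($\delta x\delta^{-1}=S(x)$) whose induced map $\bar S$ on $H_1^r(\mathbb Z)/Z(H_1^r(\mathbb Z))\cong\mathbb Z^2$ (basis: classes of $\alpha,\beta$) is conjugate in $\mathrm{GL}(2,\mathbb R)$ to a rotation. Matrices: $S_1=I_2$, $S_2=-I_2$, $S_3=\begin{pmatrix}0&-1\\1&-1\end{pmatrix}$, $S_4=\begin{pmatrix}0&-1\\1&0\end{pmatrix}$, $S_6=\begin{pmatrix}1&-1\\1&0\end{pmatrix}$. The groups $L^i_r$, $L^{j,+}_r$ are $H_1^r(\mathbb Z)\rtimes_S\mathbb Z\delta$ with $S(\gamma)=\gamma$ and $(S(\alpha),S(\beta))$ given by: $L^1_r$: $(\alpha,\beta)$; $L^2_r$: $(\alpha^{-1},\beta^{-1})$; $L^{2,+}_r$ ($r$ even): $(\alpha^{-1}\gamma,\beta^{-1}\gamma^{-1})$; $L^3_r$: $(\beta\gamma^r,\beta^{-1}\alpha^{-1})$; $L^{3,+}_r$ ($3\mid r$): $(\beta\gamma^{r-1},\beta^{-1}\alpha^{-1}\gamma)$; $L^4_r$: $(\beta,\alpha^{-1})$;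 $L^{4,+}_r$ ($r$ even): $(\beta\gamma,\alpha^{-1})$; $L^6_r$: $(\alpha\beta,\alpha^{-1})$. *)

(* Defs.v *)
From Stdlib Require Import ZArith Reals.

(* ---------- The discrete Heisenberg group H_1^r(Z) ----------
   An element (a,b,c) : Z*Z*Z stands for the normal form alpha^a beta^b gamma^c.
   From alpha beta = gamma^r beta alpha one gets
     beta^b alpha^a' = alpha^a' beta^b gamma^(-r a' b),
   hence the multiplication below. *)
Definition H : Type := (Z * Z * Z)%type.

Definition hmul (r : Z) (x y : H) : H :=
  let '(a, b, c) := x in
  let '(a', b', c') := y in
  ((a + a')%Z, (b + b')%Z, (c + c' - r * a' * b)%Z).

Definition hone : H := (0%Z, 0%Z, 0%Z).
Definition al : H := (1%Z, 0%Z, 0%Z).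
Definition be : H := (0%Z, 1%Z, 0%Z).
Definition ga : H := (0%Z, 0%Z, 1%Z).

Definition hpow (r : Z) (x : H) (n : Z) : H :=
  let '(a, b, c) := x in
  ((n * a)%Z, (n * b)%Z, (n * c - r * a * b * ((n * (n - 1)) / 2))%Z).

Definition phi (r : Z) (u v : H) (x : H) : H :=
  let '(a, b, c) := x in
  hmul r (hmul r (hpow r u a) (hpow r v b)) (0%Z, 0%Z, c).

Definition hz (x : H) : Z := let '(_, _, c) := x in c.
Definition hx (x : H) : Z := let '(a, _, _) := x in a.
Definition hy (x : H) : Z := let '(_, b, _) := x in b.

(* Images of alpha, beta under the inverse of phi r u v, when the induced
   matrix [[u1, v1],[u2, v2]] has determinant 1: the linear part is the
   inverse matrix, the gamma-exponent is chosen so that phi r u v maps the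
   result back to alpha (resp. beta). *)
Definition inv_u (r : Z) (u v : H) : H :=
  (hy v, (- hy u)%Z, (- hz (phi r u v (hy v, (- hy u)%Z, 0%Z)))%Z).
Definition inv_v (r : Z) (u v : H) : H :=
  ((- hx v)%Z, hx u, (- hz (phi r u v ((- hx v)%Z, hx u, 0%Z)))%Z).

(* ---------- Semidirect products H_1^r(Z) x|_S Z delta ----------
   Elements (h, n) stand for h delta^n; delta h delta^-1 = S h, so
   (h delta^n)(h' delta^n') = h S^n(h') delta^(n+n'). *)
Definition iterZ (S T : H -> H) (n : Z) (h : H) : H :=
  match n with
  | Z0 => h
  | Zpos p => Pos.iter S h p
  | Zneg p => Pos.iter T h p
  end.

Definition G : Type := (H * Z)%type.

Definition sdmul (r : Z) (S T : H -> H) (x y : G) : G :=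
  let '(h, n) := x in
  let '(h', n') := y in
  (hmul r h (iterZ S T n h'), (n + n')%Z).

Definition haut (r : Z) (S T : H -> H) : Prop :=
  (forall x y, S (hmul r x y) = hmul r (S x) (S y)) /\
  (forall x, T (S x) = x) /\ (forall x, S (T x) = x).

Definition is_iso (m1 m2 : G -> G -> G) (f : G -> G) : Prop :=
  (forall x y, f (m1 x y) = m2 (f x) (f y)) /\
  exists g : G -> G, (forall x, g (f x) = x) /\ (forall y, f (g y) = y).

Definition iso (m1 m2 : G -> G -> G) : Prop := exists f, is_iso m1 m2 f.

(* matrix of the induced map bar S on H/Z(H) = Z^2 (basis: classes of alpha, beta):
   column 1 = class of S(alpha), column 2 = class of S(beta) *)
Definition sbar11 (S : H -> H) : Z := hx (S al).
Definition sbar21 (S : H -> H) : Z := hy (S al).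
Definition sbar12 (S : H -> H) : Z := hx (S be).
Definition sbar22 (S : H -> H) : Z := hy (S be).

Definition conj_to_rotation (m11 m12 m21 m22 : Z) : Prop :=
  exists (p11 p12 p21 p22 t : R),
    (p11 * p22 - p12 * p21 <> 0)%R /\
    (p11 * IZR m11 + p12 * IZR m21 = cos t * p11 - sin t * p21)%R /\
    (p11 * IZR m12 + p12 * IZR m22 = cos t * p12 - sin t * p22)%R /\
    (p21 * IZR m11 + p22 * IZR m21 = sin t * p11 + cos t * p21)%R /\
    (p21 * IZR m12 + p22 * IZR m22 = sin t * p12 + cos t * p22)%R.

Definition osc_data (r : Z) (S T : H -> H) : Prop :=
  (0 < r)%Z /\ haut r S T /\
  conj_to_rotation (sbar11 S) (sbar12 S) (sbar21 S) (sbar22 S).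

Inductive lab : Type := L1 | L2 | L2p | L3 | L3p | L4 | L4p | L6.

Definition lab_valid (i : lab) (r : Z) : Prop :=
  (0 < r)%Z /\
  match i with
  | L2p | L4p => Z.Even r
  | L3p => (3 | r)%Z
  | _ => True
  end.

Definition lab_gens (i : lab) (r : Z) : H * H :=
  let w := hmul r in
  let p := hpow r in
  match i with
  | L1  => (al, be)
  | L2  => (p al (-1)%Z, p be (-1)%Z)
  | L2p => (w (p al (-1)%Z) ga, w (p be (-1)%Z) (p ga (-1)%Z))
  | L3  => (w be (p ga r), w (p be (-1)%Z) (p al (-1)%Z))
  | L3p => (w be (p ga (r - 1)%Z), w (w (p be (-1)%Z) (p al (-1)%Z)) ga)
  | L4  => (be, p al (-1)%Z)
  | L4p => (w be ga, p al (-1)%Z)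
  | L6  => (w al be, p al (-1)%Z)
  end%Z.

Definition lab_S (i : lab) (r : Z) : H -> H :=
  phi r (fst (lab_gens i r)) (snd (lab_gens i r)).
Definition lab_T (i : lab) (r : Z) : H -> H :=
  phi r (inv_u r (fst (lab_gens i r)) (snd (lab_gens i r)))
        (inv_v r (fst (lab_gens i r)) (snd (lab_gens i r))).

Definition Lgrp (i : lab) (r : Z) : G -> G -> G := sdmul r (lab_S i r) (lab_T i r).

(* Main.v *)
Require Import Defs.
From Stdlib Require Import ZArith Reals Lia Lra Classical.

Open Scope Z_scope.

Definition D (n : Z) : Z := n * (n - 1) / 2.

Lemma D_spec n : 2 * D n = n * (n - 1).
Proof.
  unfold D. destruct (Z.Even_or_Odd n) as [[m ->]|[m ->]].
  - replace (2 * m * (2 * m - 1)) with ((m * (2*m-1)) * 2) by ring.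
    rewrite Z_div_mult by lia. ring.
  - replace ((2 * m + 1) * (2 * m + 1 - 1)) with (((2*m+1) * m) * 2) by ring.
    rewrite Z_div_mult by lia. ring.
Qed.

Lemma D_add m n : D (m + n) = D m + D n + m * n.
Proof.
  apply (Z.mul_reg_l _ _ 2); [lia|].
  rewrite !Z.mul_add_distr_l, !D_spec. ring.
Qed.

Lemma D_0 : D 0 = 0. Proof. reflexivity. Qed.
Lemma D_1 : D 1 = 0. Proof. reflexivity. Qed.
Lemma D_m1 : D (-1) = 1. Proof. reflexivity. Qed.
Lemma D_opp n : D (- n) = D n + n.
Proof. apply (Z.mul_reg_l _ _ 2); [lia|]. rewrite Z.mul_add_distr_l, !D_spec. ring. Qed.
Lemma D_mul m n : D (m * n) = m * m * D n + n * D m.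
Proof. apply (Z.mul_reg_l _ _ 2); [lia|]. rewrite Z.mul_add_distr_l.
  replace (2 * (m*m*D n)) with (m*m*(2*D n)) by ring.
  replace (2 * (n*D m)) with (n*(2*D m)) by ring. rewrite !D_spec. ring. Qed.

Lemma hpow_eq r a b c n : hpow r (a,b,c) n = (n*a, n*b, n*c - r*a*b*D n).
Proof. reflexivity. Qed.

Lemma hmul_eq r a b c a' b' c' : hmul r (a,b,c) (a',b',c') = (a+a', b+b', c+c'-r*a'*b).
Proof. reflexivity. Qed.

Lemma triple_eq (a b c a' b' c' : Z) : a = a' -> b = b' -> c = c' -> (a,b,c) = (a',b',c').
Proof. intros; subst; reflexivity. Qed.
Ltac teq := apply triple_eq.

Ltac hsimpl := repeat (rewrite ?hpow_eq, ?hmul_eq).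
Ltac dH x := let a := fresh "a" in let b := fresh "b" in let c := fresh "c" in destruct x as [[a b] c].

Lemma hmul_assoc r x y z : hmul r (hmul r x y) z = hmul r x (hmul r y z).
Proof. dH x; dH y; dH z. hsimpl. teq; ring. Qed.
Lemma hmul_1_l r x : hmul r hone x = x.
Proof. dH x. unfold hone. hsimpl. teq; ring. Qed.
Lemma hmul_1_r r x : hmul r x hone = x.
Proof. dH x. unfold hone. hsimpl. teq; ring. Qed.
Definition hinv r x := hpow r x (-1).
Lemma hmul_inv_r r x : hmul r x (hinv r x) = hone.
Proof. dH x. unfold hinv, hone. hsimpl. rewrite D_m1. teq; ring. Qed.
Lemma hmul_inv_l r x : hmul r (hinv r x) x = hone.
Proof. dH x. unfold hinv, hone. hsimpl. rewrite D_m1. teq; ring. Qed.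

Lemma hpow_add r x m n : hpow r x (m + n) = hmul r (hpow r x m) (hpow r x n).
Proof. dH x. hsimpl. rewrite D_add. teq; ring. Qed.
Lemma hpow_0 r x : hpow r x 0 = hone.
Proof. dH x. hsimpl. unfold hone. rewrite D_0. teq; ring. Qed.
Lemma hpow_1 r x : hpow r x 1 = x.
Proof. dH x. hsimpl. rewrite D_1. teq; ring. Qed.

Definition hhom r s (f : H -> H) := forall x y, f (hmul r x y) = hmul s (f x) (f y).

Lemma hcancel_r r x y z : hmul r x z = hmul r y z -> x = y.
Proof. intro E. rewrite <- (hmul_1_r r x), <- (hmul_1_r r y), <- (hmul_inv_r r z),
  <- !hmul_assoc, E. reflexivity. Qed.

Lemma hom_one r s f : hhom r s f -> f hone = hone.
Proof. intro Hf. apply (hcancel_r s _ _ (f hone)). rewrite <- Hf, !hmul_1_l. reflexivity. Qed.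

Lemma hom_pow r s f x n : hhom r s f -> f (hpow r x n) = hpow s (f x) n.
Proof. intro Hf. induction n using Z.peano_ind.
  - rewrite !hpow_0. apply (hom_one r s f Hf).
  - rewrite <- Z.add_1_r, !hpow_add, Hf, IHn, !hpow_1. reflexivity.
  - apply (hcancel_r s _ _ (f x)).
    rewrite <- (hpow_1 r x) at 2. rewrite <- Hf, <- hpow_add.
    rewrite <- (hpow_1 s (f x)) at 2. rewrite <- hpow_add.
    replace (Z.pred n + 1) with n by lia. exact IHn.
Qed.

Lemma h_decomp r a b c : (a,b,c) = hmul r (hmul r (hpow r al a) (hpow r be b)) (hpow r ga c).
Proof. unfold al, be, ga. hsimpl. teq; ring. Qed.

Lemma hom_decomp r s f a b c : hhom r s f ->
  f (a,b,c) = hmul s (hmul s (hpow s (f al) a) (hpow s (f be) b)) (hpow s (f ga) c).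
Proof. intro Hf. rewrite (h_decomp r a b c) at 1. rewrite !Hf, !(hom_pow r s). reflexivity. all: auto. Qed.

Lemma hom_ext r s f g : hhom r s f -> hhom r s g -> f al = g al -> f be = g be -> f ga = g ga ->
  forall x, f x = g x.
Proof. intros Hf Hg E1 E2 E3 x. dH x. rewrite (hom_decomp r s f), (hom_decomp r s g); auto.
  rewrite E1, E2, E3. reflexivity. Qed.

Lemma phi_eq r u1 u2 u3 v1 v2 v3 a b c : phi r (u1,u2,u3) (v1,v2,v3) (a,b,c) =
  (a*u1 + b*v1, a*u2 + b*v2, a*u3 - r*u1*u2*D a + (b*v3 - r*v1*v2*D b) - r*(b*v1)*(a*u2) + c).
Proof. unfold phi. hsimpl. teq; ring. Qed.

Lemma phi_hom r u v : hx u * hy v - hy u * hx v = 1 -> hhom r r (phi r u v).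
Proof. dH u. dH v. simpl. intros Hd x y. dH x. dH y. hsimpl. rewrite !phi_eq. hsimpl.
  rewrite !D_add. teq; try ring.
  rewrite <- (Z.mul_1_r (r*a2*b1)). rewrite <- Hd. ring. Qed.

Lemma haut_S_hom r S T : haut r S T -> hhom r r S.
Proof. intros [H1 _] x y. apply H1. Qed.
Lemma haut_T_hom r S T : haut r S T -> hhom r r T.
Proof. intros [H1 [H2 H3]] x y. rewrite <- (H3 x), <- (H3 y) at 1. rewrite <- H1, H2. reflexivity. Qed.
Lemma haut_sym r S T : haut r S T -> haut r T S.
Proof. intro Ha. pose proof (haut_T_hom _ _ _ Ha). destruct Ha as [_ [H2 H3]]. split; [|split]; auto. Qed.

Lemma iterZ_succ S T n h : (forall x, S (T x) = x) ->
  iterZ S T (Z.succ n) h = S (iterZ S T n h).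
Proof. intro HST. destruct n as [|p|p].
  - reflexivity.
  - simpl. rewrite Pos.add_1_r, Pos.iter_succ. reflexivity.
  - destruct (Pos.succ_pred_or p) as [->| <-].
    + simpl. rewrite HST. reflexivity.
    + replace (Z.succ (Z.neg (Pos.succ (Pos.pred p)))) with (Z.neg (Pos.pred p)) by lia.
      simpl. rewrite Pos.iter_succ, HST. reflexivity.
Qed.

Lemma iterZ_pred S T n h : (forall x, T (S x) = x) ->
  iterZ S T (Z.pred n) h = T (iterZ S T n h).
Proof. intro HTS. destruct n as [|p|p].
  - reflexivity.
  - destruct (Pos.succ_pred_or p) as [->| <-].
    + simpl. rewrite HTS. reflexivity.
    + replace (Z.pred (Z.pos (Pos.succ (Pos.pred p)))) with (Z.pos (Pos.pred p)) by lia.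
      simpl. rewrite Pos.iter_succ, HTS. reflexivity.
  - replace (Z.pred (Z.neg p)) with (Z.neg (Pos.succ p)) by lia. simpl.
    rewrite Pos.iter_succ. reflexivity.
Qed.

Lemma iterZ_add r S T m n h : haut r S T ->
  iterZ S T (m + n) h = iterZ S T m (iterZ S T n h).
Proof. intros [_ [H2 H3]]. revert h. induction m using Z.peano_ind; intro h.
  - reflexivity.
  - rewrite Z.add_succ_l, !iterZ_succ, IHm; auto.
  - rewrite Z.add_pred_l, !iterZ_pred, IHm; auto.
Qed.

Lemma iterZ_hom r S T n : haut r S T -> hhom r r (iterZ S T n).
Proof. intro Ha. pose proof (haut_S_hom _ _ _ Ha) as HS. pose proof (haut_T_hom _ _ _ Ha) as HT.
  destruct Ha as [_ [H2 H3]].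
  induction n using Z.peano_ind; intros x y.
  - reflexivity.
  - rewrite !iterZ_succ, IHn, HS; auto.
  - rewrite !iterZ_pred, IHn, HT; auto.
Qed.

Lemma iterZ_1 S T h : iterZ S T 1 h = S h. Proof. reflexivity. Qed.
Lemma iterZ_m1 S T h : iterZ S T (-1) h = T h. Proof. reflexivity. Qed.
Lemma iterZ_0 S T h : iterZ S T 0 h = h. Proof. reflexivity. Qed.

Definition grp {X} (m : X -> X -> X) (e : X) (i : X -> X) : Prop :=
  (forall x y z, m (m x y) z = m x (m y z)) /\ (forall x, m e x = x) /\ (forall x, m x e = x) /\
  (forall x, m x (i x) = e) /\ (forall x, m (i x) x = e).

Definition gpow {X} (m : X -> X -> X) (e : X) (i : X -> X) (x : X) (n : Z) : X :=
  match n with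
  | Z0 => e
  | Zpos p => Pos.iter (fun y => m y x) e p
  | Zneg p => Pos.iter (fun y => m y (i x)) e p
  end.

Lemma grp_cancel_r {X} m e i (x y z : X) : grp m e i -> m x z = m y z -> x = y.
Proof. intros [A [L [R [I1 I2]]]] E.
  rewrite <- (R x), <- (R y), <- (I1 z), <- !A, E. reflexivity. Qed.
Lemma grp_cancel_l {X} m e i (x y z : X) : grp m e i -> m z x = m z y -> x = y.
Proof. intros [A [L [R [I1 I2]]]] E.
  rewrite <- (L x), <- (L y), <- (I2 z), !A, E. reflexivity. Qed.

Lemma gpow_succ {X} m e i (x : X) n : grp m e i -> gpow m e i x (Z.succ n) = m (gpow m e i x n) x.
Proof. intros G. pose proof G as [A [L [R [I1 I2]]]]. destruct n as [|p|p].
  - simpl. rewrite L. reflexivity.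
  - simpl. rewrite Pos.add_1_r, Pos.iter_succ. reflexivity.
  - destruct (Pos.succ_pred_or p) as [->| <-].
    + simpl. rewrite L, I2. reflexivity.
    + replace (Z.succ (Z.neg (Pos.succ (Pos.pred p)))) with (Z.neg (Pos.pred p)) by lia.
      simpl. rewrite Pos.iter_succ, A, I2, R. reflexivity.
Qed.

Lemma gpow_pred {X} m e i (x : X) n : grp m e i -> gpow m e i x (Z.pred n) = m (gpow m e i x n) (i x).
Proof. intros G. pose proof G as [A [L [R [I1 I2]]]]. destruct n as [|p|p].
  - simpl. rewrite L. reflexivity.
  - destruct (Pos.succ_pred_or p) as [->| <-].
    + simpl. rewrite L, I1. reflexivity.
    + replace (Z.pred (Z.pos (Pos.succ (Pos.pred p)))) with (Z.pos (Pos.pred p)) by lia.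
      simpl. rewrite Pos.iter_succ, A, I1, R. reflexivity.
  - replace (Z.pred (Z.neg p)) with (Z.neg (Pos.succ p)) by lia. simpl.
    rewrite Pos.iter_succ. reflexivity.
Qed.

Lemma gpow_add {X} m e i (x : X) a b : grp m e i ->
  gpow m e i x (a + b) = m (gpow m e i x a) (gpow m e i x b).
Proof. intro G. pose proof G as [A [L [R [I1 I2]]]]. induction b using Z.peano_ind.
  - rewrite Z.add_0_r. simpl. rewrite R. reflexivity.
  - rewrite Z.add_succ_r, !gpow_succ, IHb, A; auto.
  - rewrite Z.add_pred_r, !gpow_pred, IHb, A; auto.
Qed.

Lemma gpow_1 {X} m e i (x : X) : grp m e i -> gpow m e i x 1 = x.
Proof. intros [A [L _]]. simpl. apply L. Qed.

Lemma grp_hom_e {X Y} m e i m' e' i' (f : X -> Y) : grp m e i -> grp m' e' i' ->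
  (forall x y, f (m x y) = m' (f x) (f y)) -> f e = e'.
Proof. intros G G' Hf. apply (grp_cancel_r m' e' i' _ _ (f e) G').
  rewrite <- Hf. destruct G as [_ [L _]]. destruct G' as [_ [L' _]]. rewrite L, L'. reflexivity. Qed.

Lemma grp_hom_i {X Y} m e i m' e' i' (f : X -> Y) x : grp m e i -> grp m' e' i' ->
  (forall x y, f (m x y) = m' (f x) (f y)) -> f (i x) = i' (f x).
Proof. intros G G' Hf. apply (grp_cancel_l m' e' i' _ _ (f x) G').
  rewrite <- Hf. pose proof (grp_hom_e _ _ _ _ _ _ f G G' Hf).
  destruct G as [_ [_ [_ [I1 _]]]]. destruct G' as [_ [_ [_ [I1' _]]]]. rewrite I1, I1'. auto. Qed.

Lemma grp_hom_pow {X Y} m e i m' e' i' (f : X -> Y) x n : grp m e i -> grp m' e' i' ->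
  (forall x y, f (m x y) = m' (f x) (f y)) -> f (gpow m e i x n) = gpow m' e' i' (f x) n.
Proof. intros G G' Hf. induction n using Z.peano_ind.
  - simpl. apply (grp_hom_e _ _ _ _ _ _ f G G' Hf).
  - rewrite !gpow_succ, Hf, IHn; auto.
  - rewrite !gpow_pred, Hf, IHn; auto. rewrite (grp_hom_i _ _ _ _ _ _ f x G G' Hf). reflexivity.
Qed.

Definition ge : G := (hone, 0).
Definition gi r S T (x : G) : G := let '(h, n) := x in (iterZ S T (- n) (hinv r h), - n).

Lemma hgrp r : grp (hmul r) hone (hinv r).
Proof. split; [|split; [|split; [|split]]]; intros; auto using hmul_assoc, hmul_1_l, hmul_1_r, hmul_inv_r, hmul_inv_l. Qed.

Lemma sd_grp r S T : haut r S T -> grp (sdmul r S T) ge (gi r S T).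
Proof. intro Ha. pose proof (fun n => iterZ_hom r S T n Ha) as Hh.
  split; [|split; [|split; [|split]]].
  - intros [h1 n1] [h2 n2] [h3 n3]. cbn [sdmul gi ge iterZ]. f_equal; [|ring].
    rewrite Hh, hmul_assoc, iterZ_add with (r:=r); auto.
  - intros [h n]. cbn [sdmul gi ge iterZ]. rewrite hmul_1_l. reflexivity.
  - intros [h n]. unfold ge. cbn [sdmul gi ge iterZ]. rewrite (hom_one r r _ (Hh n)), hmul_1_r, Z.add_0_r. reflexivity.
  - intros [h n]. cbn [sdmul gi ge iterZ]. rewrite <- iterZ_add with (r:=r); auto. replace (n + - n) with 0 by ring.
    rewrite hmul_inv_r. unfold ge. f_equal; ring.
  - intros [h n]. cbn [sdmul gi ge iterZ]. rewrite <- (Hh (-n)), hmul_inv_l, (hom_one _ _ _ (Hh (-n))).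
    unfold ge. f_equal; ring.
Qed.

Lemma iso_sym m1 m2 : iso m1 m2 -> iso m2 m1.
Proof. intros [f [Hf [g [Hgf Hfg]]]]. exists g. split.
  - intros x y. rewrite <- (Hfg x), <- (Hfg y), <- Hf, !Hgf. reflexivity.
  - exists f. split; auto. Qed.

Lemma iso_trans m1 m2 m3 : iso m1 m2 -> iso m2 m3 -> iso m1 m3.
Proof. intros [f [Hf [g [Hgf Hfg]]]] [f' [Hf' [g' [Hgf' Hfg']]]]. exists (fun x => f' (f x)). split.
  - intros x y. rewrite Hf, Hf'. reflexivity.
  - exists (fun y => g (g' y)). split; intros; [rewrite Hgf', Hgf|rewrite Hfg, Hfg']; reflexivity. Qed.

Lemma iso_refl m : iso m m.
Proof. exists (fun x => x). split; [reflexivity|]. exists (fun x => x). split; reflexivity. Qed.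

Lemma iterZ_swap S T n h : iterZ T S (- n) h = iterZ S T n h.
Proof. destruct n; reflexivity. Qed.

Lemma iso_inv r S T : iso (sdmul r S T) (sdmul r T S).
Proof. exists (fun x => let '(h,n) := x in (h, -n)). split.
  - intros [h n] [h' n']. cbn [sdmul]. rewrite iterZ_swap. f_equal. ring.
  - exists (fun x => let '(h,n) := x in (h, -n)). split; intros [h n]; f_equal; ring. Qed.

Lemma gp_snd s S' T' h0 n : haut s S' T' ->
  snd (gpow (sdmul s S' T') ge (gi s S' T') (h0, 1) n) = n.
Proof. intro Ha. pose proof (sd_grp _ _ _ Ha) as Gp. induction n using Z.peano_ind.
  - reflexivity.
  - rewrite gpow_succ by auto. destruct (gpow _ _ _ _ n) as [c k]. simpl in *. lia.
  - rewrite gpow_pred by auto. destruct (gpow _ _ _ _ n) as [c k]. simpl in *. lia.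
Qed.

Lemma iso_conj r s S T S' T' (A B : H -> H) h0 :
  haut r S T -> haut s S' T' -> hhom r s A ->
  (forall x, B (A x) = x) -> (forall y, A (B y) = y) ->
  (forall h, hmul s h0 (S' (A h)) = hmul s (A (S h)) h0) ->
  iso (sdmul r S T) (sdmul s S' T').
Proof.
  intros Ha Ha' HA HBA HAB Hc.
  set (m' := sdmul s S' T'). set (i' := gi s S' T').
  pose proof (sd_grp _ _ _ Ha') as Gp. fold m' i' in Gp.
  pose proof Gp as [As [Ls [Rs [I1s I2s]]]].
  set (g := (h0, 1) : G). set (gp := gpow m' ge i' g).
  assert (F1 : forall n, snd (gp n) = n) by (intro; apply gp_snd; auto).
  assert (F3 : forall x c n, m' (x, 0) (c, n) = (hmul s x c, n)) by (intros; reflexivity).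
  assert (B0 : forall h, m' (A (S h), 0) g = m' g (A h, 0)).
  { intro h. unfold m', g. cbn [sdmul iterZ]. rewrite <- Hc. reflexivity. }
  assert (B1 : forall h, m' (A (T h), 0) (i' g) = m' (i' g) (A h, 0)).
  { intro h. destruct Ha as [_ [_ HST]]. pose proof (B0 (T h)) as E. rewrite HST in E.
    apply (grp_cancel_r m' ge i' _ _ g Gp). rewrite As, I2s, Rs.
    apply (grp_cancel_l m' ge i' _ _ g Gp). rewrite <- !As, I1s, Ls. symmetry. exact E. }
  assert (F4 : forall n h, m' (A (iterZ S T n h), 0) (gp n) = m' (gp n) (A h, 0)).
  { pose proof Ha as [_ [HTS HST]].
    induction n using Z.peano_ind; intro h.
    - change (gp 0) with ge. change (iterZ S T 0 h) with h. rewrite Ls, Rs. reflexivity.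
    - unfold gp. rewrite gpow_succ by auto. fold gp.
      rewrite <- Z.add_1_r, (iterZ_add r S T n 1 h Ha), iterZ_1.
      rewrite <- As, IHn, As, B0, As. reflexivity.
    - unfold gp. rewrite gpow_pred by auto. fold gp.
      replace (Z.pred n) with (n + -1) by lia.
      rewrite (iterZ_add r S T n (-1) h Ha), iterZ_m1.
      rewrite <- As, IHn, As, B1, As. reflexivity. }
  exists (fun x => let '(h, n) := x in m' (A h, 0) (gp n)). split.
  - intros [h n] [h' n']. cbn [sdmul]. fold m'.
    unfold gp. rewrite gpow_add by auto. fold gp.
    rewrite HA. replace (hmul s (A h) (A (iterZ S T n h')), 0) with (m' (A h, 0) (A (iterZ S T n h'), 0))
      by (unfold m'; reflexivity).
    rewrite !As, <- (As _ (gp n)), F4, !As. reflexivity.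
  - exists (fun y => let '(h', n) := y in (B (hmul s h' (hinv s (fst (gp n)))), n)). split.
    + intros [h n]. specialize (F1 n). destruct (gp n) as [c k] eqn:Eg. simpl in F1. subst k.
      rewrite F3. rewrite Eg. cbn [fst]. rewrite hmul_assoc, hmul_inv_r, hmul_1_r, HBA. reflexivity.
    + intros [h n]. specialize (F1 n). destruct (gp n) as [c k] eqn:Eg. simpl in F1. subst k.
      cbv beta iota. rewrite F3. cbn [fst]. rewrite HAB, hmul_assoc, hmul_inv_l, hmul_1_r. reflexivity.
Qed.

Definition hdet (u v : H) := hx u * hy v - hy u * hx v.

Lemma phi_inj r u v x y : hdet u v = 1 -> phi r u v x = phi r u v y -> x = y.
Proof. unfold hdet. destruct u as [[u1 u2] u3]. destruct v as [[v1 v2] v3].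
  destruct x as [[x1 x2] x3]. destruct y as [[y1 y2] y3]. cbn [hx hy hz]. intros Hd.
  rewrite !phi_eq. intro E. injection E. intros E3 E2 E1.
  assert (x1 - y1 = v2*((x1*u1 + x2*v1) - (y1*u1+y2*v1)) - v1*((x1*u2+x2*v2) - (y1*u2+y2*v2))).
  { transitivity ((x1-y1)*(u1*v2-u2*v1)); [rewrite Hd; ring| ring]. }
  assert (x2 - y2 = u1*((x1*u2+x2*v2) - (y1*u2+y2*v2)) - u2*((x1*u1 + x2*v1) - (y1*u1+y2*v1))).
  { transitivity ((x2-y2)*(u1*v2-u2*v1)); [rewrite Hd; ring| ring]. }
  rewrite E1, E2 in *. assert (x1 = y1) by lia. assert (x2 = y2) by lia.
  subst. f_equal. lia. Qed.

Lemma phi_inv_u r u v : hdet u v = 1 -> phi r u v (inv_u r u v) = al.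
Proof. unfold hdet, inv_u, al. dH u. dH v. cbn [hx hy hz]. intro Hd. rewrite !phi_eq. cbn [hx hy hz]. teq; try lia; ring. Qed.
Lemma phi_inv_v r u v : hdet u v = 1 -> phi r u v (inv_v r u v) = be.
Proof. unfold hdet, inv_v, be. dH u. dH v. cbn [hx hy hz]. intro Hd. rewrite !phi_eq. cbn [hx hy hz]. teq; try lia; ring. Qed.
Lemma phi_ga r u v : phi r u v ga = ga.
Proof. dH u. dH v. unfold ga. rewrite phi_eq. rewrite D_0. teq; ring. Qed.
Lemma phi_al r u v : phi r u v al = u.
Proof. dH u. dH v. unfold al. rewrite phi_eq. rewrite D_0, D_1. teq; ring. Qed.
Lemma phi_be r u v : phi r u v be = v.
Proof. dH u. dH v. unfold be. rewrite phi_eq. rewrite D_0, D_1. teq; ring. Qed.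

Lemma hdet_inv r u v : hdet u v = 1 -> hdet (inv_u r u v) (inv_v r u v) = 1.
Proof. unfold hdet, inv_u, inv_v. simpl. lia. Qed.

Lemma hom_comp r f g : hhom r r f -> hhom r r g -> hhom r r (fun x => f (g x)).
Proof. intros Hf Hg x y. rewrite Hg, Hf. reflexivity. Qed.

Lemma phi_haut r u v : hdet u v = 1 -> haut r (phi r u v) (phi r (inv_u r u v) (inv_v r u v)).
Proof. intro Hd. pose proof (hdet_inv r u v Hd) as Hd'.
  pose proof (phi_hom r u v Hd) as HS. pose proof (phi_hom r _ _ Hd') as HT.
  assert (ST : forall x, phi r u v (phi r (inv_u r u v) (inv_v r u v) x) = x).
  { apply (hom_ext r r _ (fun x => x)); auto using hom_comp.
    - intros x y; reflexivity.
    - rewrite phi_al. apply phi_inv_u; auto.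
    - rewrite phi_be. apply phi_inv_v; auto.
    - rewrite !phi_ga. reflexivity. }
  split; [exact HS|split; [|exact ST]].
  intro x. apply (phi_inj r u v _ _ Hd). rewrite ST. reflexivity.
Qed.

Definition lab_u (i : lab) (r : Z) : H :=
  match i with
  | L1 => (1,0,0) | L2 => (-1,0,0) | L2p => (-1,0,1) | L3 => (0,1,r) | L3p => (0,1,r-1)
  | L4 => (0,1,0) | L4p => (0,1,1) | L6 => (1,1,0) end.
Definition lab_v (i : lab) (r : Z) : H :=
  match i with
  | L1 => (0,1,0) | L2 => (0,-1,0) | L2p => (0,-1,-1) | L3 => (-1,-1,-r) | L3p => (-1,-1,1-r)
  | L4 => (-1,0,0) | L4p => (-1,0,0) | L6 => (-1,0,0) end.

Lemma lab_gens_eq i r : lab_gens i r = (lab_u i r, lab_v i r).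
Proof. destruct i; unfold lab_gens, al, be, ga; cbn [lab_u lab_v fst snd]; hsimpl;
  rewrite ?D_0, ?D_1, ?D_m1; apply (f_equal2 pair); teq; ring. Qed.

Lemma lab_S_eq i r : lab_S i r = phi r (lab_u i r) (lab_v i r).
Proof. unfold lab_S. rewrite lab_gens_eq. reflexivity. Qed.
Lemma lab_T_eq i r : lab_T i r = phi r (inv_u r (lab_u i r) (lab_v i r)) (inv_v r (lab_u i r) (lab_v i r)).
Proof. unfold lab_T. rewrite lab_gens_eq. reflexivity. Qed.

Lemma lab_det i r : hdet (lab_u i r) (lab_v i r) = 1.
Proof. destruct i; reflexivity. Qed.

Lemma lab_haut i r : haut r (lab_S i r) (lab_T i r).
Proof. rewrite lab_S_eq, lab_T_eq. apply phi_haut, lab_det. Qed.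

Open Scope R_scope.
Lemma rot_I : conj_to_rotation 1 0 0 1.
Proof. exists 1, 0, 0, 1, 0. rewrite cos_0, sin_0. simpl. repeat split; lra. Qed.
Lemma rot_mI : conj_to_rotation (-1) 0 0 (-1).
Proof. exists 1, 0, 0, 1, PI. rewrite cos_PI, sin_PI. simpl. repeat split; lra. Qed.
Lemma rot_S4 : conj_to_rotation 0 (-1) 1 0.
Proof. exists 1, 0, 0, 1, (PI/2). rewrite cos_PI2, sin_PI2. simpl. repeat split; lra. Qed.
Lemma sqrt3_pos : 0 < sqrt 3.
Proof. apply sqrt_lt_R0. lra. Qed.
Lemma sqrt3_sq : sqrt 3 * sqrt 3 = 3.
Proof. apply sqrt_sqrt. lra. Qed.
Lemma rot_S3 : conj_to_rotation 0 (-1) 1 (-1).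
Proof. exists 1, (-1/2), 0, (sqrt 3 / 2), (PI - PI/3).
  rewrite Rtrigo_facts.cos_pi_minus, Rtrigo_facts.sin_pi_minus, cos_PI3, sin_PI3.
  pose proof sqrt3_pos. pose proof sqrt3_sq. simpl. repeat split; nra. Qed.
Lemma rot_S6 : conj_to_rotation 1 (-1) 1 0.
Proof. exists 1, (-1/2), 0, (sqrt 3 / 2), (PI/3).
  rewrite cos_PI3, sin_PI3.
  pose proof sqrt3_pos. pose proof sqrt3_sq. simpl. repeat split; nra. Qed.
Close Scope R_scope.

Lemma lab_osc i r : lab_valid i r -> osc_data r (lab_S i r) (lab_T i r).
Proof. intros [Hr _]. split; [exact Hr|split; [apply lab_haut|]].
  unfold sbar11, sbar12, sbar21, sbar22. rewrite lab_S_eq, phi_al, phi_be.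
  destruct i; simpl; auto using rot_I, rot_mI, rot_S3, rot_S4, rot_S6. Qed.

Lemma conj_hom r g : hhom r r (fun x => hmul r (hmul r g x) (hinv r g)).
Proof. intros x y. rewrite !hmul_assoc. f_equal. f_equal.
  rewrite <- (hmul_assoc r (hinv r g) g), hmul_inv_l, hmul_1_l. reflexivity. Qed.

Lemma iso_by_gens r S T i u v h0 : haut r S T -> hdet u v = 1 -> S ga = ga ->
  hmul r h0 ga = hmul r ga h0 ->
  hmul r h0 (lab_S i r (phi r u v al)) = hmul r (phi r u v (S al)) h0 ->
  hmul r h0 (lab_S i r (phi r u v be)) = hmul r (phi r u v (S be)) h0 ->
  iso (sdmul r S T) (Lgrp i r).
Proof. intros Ha Hd Hg Hc E1 E2.
  pose proof (phi_haut r u v Hd) as HA. pose proof (lab_haut i r) as Hl.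
  pose proof (phi_hom r u v Hd) as Hp. pose proof (haut_S_hom _ _ _ Hl) as Hs'.
  pose proof (haut_S_hom _ _ _ Ha) as Hs.
  apply (iso_conj r r S T (lab_S i r) (lab_T i r) (phi r u v) (phi r (inv_u r u v) (inv_v r u v)) h0); auto.
  - apply HA.
  - apply HA.
  - assert (K : forall h, hmul r (hmul r h0 (lab_S i r (phi r u v h))) (hinv r h0) = phi r u v (S h)).
    { apply (hom_ext r r).
      - intros x y. rewrite Hp, Hs'. apply (conj_hom r h0).
      - intros x y. rewrite Hs, Hp. reflexivity.
      - rewrite E1, hmul_assoc, hmul_inv_r, hmul_1_r. reflexivity.
      - rewrite E2, hmul_assoc, hmul_inv_r, hmul_1_r. reflexivity.
      - rewrite Hg, phi_ga, lab_S_eq, phi_ga, Hc, hmul_assoc, hmul_inv_r, hmul_1_r. reflexivity. }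
    intro h. rewrite <- K. rewrite hmul_assoc, hmul_inv_l, hmul_1_r. reflexivity.
Qed.

Ltac evalD := repeat (match goal with |- context [D ?e] =>
  let v := eval vm_compute in (D e) in
  lazymatch v with
  | Z0 => change (D e) with 0
  | Zpos ?p => change (D e) with (Zpos p)
  | Zneg ?p => change (D e) with (Zneg p)
  end end).

Ltac crunch := unfold al, be, ga; repeat (rewrite ?phi_eq, ?hmul_eq); evalD; try teq.

Lemma case_v r k l S T : haut r S T -> S ga = ga -> S al = (1,1,k) -> S be = (-1,0,l) ->
  iso (sdmul r S T) (Lgrp L6 r).
Proof. intros Ha Hg E1 E2.
  apply (iso_by_gens r S T L6 (1,0,l+k) (0,1,-k) (0,0,0)); [exact Ha|reflexivity|exact Hg|crunch; ring| |].
  - rewrite E1, lab_S_eq. cbn [lab_u lab_v]. crunch; ring.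
  - rewrite E2, lab_S_eq. cbn [lab_u lab_v]. crunch; ring.
Qed.

Lemma mod2_e k : (2*k) mod 2 = 0. Proof. rewrite Z.mul_comm. apply Z_mod_mult. Qed.
Lemma mod2_o k : (2*k+1) mod 2 = 1. Proof. rewrite Z.add_comm, Z.mul_comm, Z_mod_plus_full. reflexivity. Qed.
Lemma mod3 a b : 0 <= b < 3 -> (3*a+b) mod 3 = b. Proof. intro. rewrite Z.add_comm, Z.mul_comm, Z_mod_plus_full. apply Z.mod_small. lia. Qed.

Ltac doit Ha Hg E1 E2 u v h0 :=
  match goal with |- iso (sdmul ?r ?S ?T) (Lgrp ?i ?r) =>
  apply (iso_by_gens r S T i u v h0); [exact Ha|reflexivity|exact Hg|crunch; ring
  | rewrite E1, lab_S_eq; cbn [lab_u lab_v]; crunch; ring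
  | rewrite E2, lab_S_eq; cbn [lab_u lab_v]; crunch; ring] end.

Lemma case_ii r k l S T : haut r S T -> S ga = ga -> S al = (-1,0,k) -> S be = (0,-1,l) ->
  ((Z.Odd r \/ (Z.Even k /\ Z.Even l)) -> iso (sdmul r S T) (Lgrp L2 r)) /\
  (~ (Z.Odd r \/ (Z.Even k /\ Z.Even l)) -> iso (sdmul r S T) (Lgrp L2p r)).
Proof. intros Ha Hg E1 E2. split; intro Hc.
  - destruct Hc as [[m Hr] | [[k1 Hk] [l1 Hl]]].
    + subst r. doit Ha Hg E1 E2 (1,0,-m*k) (0,1,l*(m+1)) (l,k,0).
    + subst k l. doit Ha Hg E1 E2 (1,0,k1) (0,1,l1) (0,0,0).
  - destruct (Z.Even_or_Odd r) as [[m Hr]|Ho]; [|exfalso; tauto]. subst r.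
    destruct (Z.Even_or_Odd k) as [[k1 Hk]|[k1 Hk]]; destruct (Z.Even_or_Odd l) as [[l1 Hl]|[l1 Hl]]; subst k l.
    + exfalso. apply Hc. right. split; [exists k1|exists l1]; reflexivity.
    + doit Ha Hg E1 E2 (1,1,k1 - m) (0,1,l1+1) (0,0,0).
    + doit Ha Hg E1 E2 (1,0,k1) (1,1,l1 - m) (0,0,0).
    + doit Ha Hg E1 E2 (1,0,k1) (0,1,l1+1) (0,0,0).
Qed.

Lemma case_iv r k l S T : haut r S T -> S ga = ga -> S al = (0,1,k) -> S be = (-1,0,l) ->
  ((Z.Odd r \/ k mod 2 = l mod 2) -> iso (sdmul r S T) (Lgrp L4 r)) /\
  (~ (Z.Odd r \/ k mod 2 = l mod 2) -> iso (sdmul r S T) (Lgrp L4p r)).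
Proof. intros Ha Hg E1 E2.
  destruct (Z.Even_or_Odd r) as [[m Hr]|[m Hr]]; subst r.
  - assert (Ev : ~ Z.Odd (2*m)) by (intros [t Ht]; lia).
    destruct (Z.Even_or_Odd k) as [[k1 Hk]|[k1 Hk]]; destruct (Z.Even_or_Odd l) as [[l1 Hl]|[l1 Hl]]; subst k l;
    split; intro Hc.
    + doit Ha Hg E1 E2 (1,0,k1+l1) (0,1,l1-k1) (0,0,0).
    + exfalso. apply Hc. right. rewrite ?mod2_e, ?mod2_o. reflexivity.
    + exfalso. destruct Hc as [Hc|Hc]; [tauto|]. rewrite ?mod2_e, ?mod2_o in Hc. discriminate.
    + doit Ha Hg E1 E2 (1,0,k1+l1) (0,1,l1-k1+1) (0,0,0).
    + exfalso. destruct Hc as [Hc|Hc]; [tauto|]. rewrite ?mod2_e, ?mod2_o in Hc. discriminate.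
    + doit Ha Hg E1 E2 (1,0,k1+l1) (0,1,l1-k1) (0,0,0).
    + doit Ha Hg E1 E2 (1,0,k1+l1+1) (0,1,l1-k1) (0,0,0).
    + exfalso. apply Hc. right. rewrite ?mod2_e, ?mod2_o. reflexivity.
  - split; intro Hc; [|exfalso; apply Hc; left; exists m; reflexivity].
    doit Ha Hg E1 E2 (1,0,-m*(k+l)) (0,1,-k-m*(k+l)) (0,k+l,0).
Qed.

Lemma div3 r : exists m rho, r = 3*m + rho /\ 0 <= rho < 3 /\ ((3 | r) <-> rho = 0).
Proof. exists (r/3), (r mod 3). pose proof (Z_div_mod_eq_full r 3). pose proof (Z.mod_pos_bound r 3).
  split; [lia|split; [lia|]]. split.
  - intros [c Hc]. lia.
  - intro E. exists (r/3). lia. Qed.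

Lemma cls3 k l : exists n tau, k - l = 3*n + tau /\ 0 <= tau < 3 /\ (k mod 3 = l mod 3 <-> tau = 0).
Proof. exists ((k-l)/3), ((k-l) mod 3).
  pose proof (Z_div_mod_eq_full (k-l) 3). pose proof (Z.mod_pos_bound (k-l) 3).
  pose proof (Z_div_mod_eq_full k 3). pose proof (Z.mod_pos_bound k 3).
  pose proof (Z_div_mod_eq_full l 3). pose proof (Z.mod_pos_bound l 3).
  split; [lia|split; [lia|]]. split; intro E; lia. Qed.

Lemma case_iii r k l S T : haut r S T -> S ga = ga -> S al = (0,1,k) -> S be = (-1,-1,l) ->
  ((~ (3 | r) \/ k mod 3 = l mod 3) -> iso (sdmul r S T) (Lgrp L3 r)) /\
  (~ (~ (3 | r) \/ k mod 3 = l mod 3) -> iso (sdmul r S T) (Lgrp L3p r)).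
Proof. intros Ha Hg E1 E2.
  destruct (div3 r) as [m [rho [Hr [Hrho Hdv]]]].
  destruct (cls3 k l) as [n [tau [Hkl [Htau Hcl]]]].
  assert (Hk : k = l + 3*n + tau) by lia. subst k. clear Hkl.
  assert (rho = 0 \/ rho = 1 \/ rho = 2) as Hro by lia.
  destruct Hro as [Hro|[Hro|Hro]]; subst rho; subst r.
  - assert (Hd : (3 | 3*m + 0)) by (apply Hdv; reflexivity).
    assert (tau = 0 \/ tau = 1 \/ tau = 2) as Ht by lia.
    destruct Ht as [Ht|[Ht|Ht]]; subst tau.
    + split; intro Hc; [|exfalso; apply Hc; right; apply Hcl; reflexivity].
      doit Ha Hg E1 E2 (1,0,(l+3*n+0) - 3*m + (2*m - n)) (0,1,2*m - n) (0,0,0).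
    + split; intro Hc; [exfalso; destruct Hc as [Hc|Hc]; [tauto|apply Hcl in Hc; lia]|].
      doit Ha Hg E1 E2 (1,0,(l+3*n+1) - (3*m-1) - (n + 1 - 2*m)) (0,1,-(n + 1 - 2*m)) (0,0,0).
    + split; intro Hc; [exfalso; destruct Hc as [Hc|Hc]; [tauto|apply Hcl in Hc; lia]|].
      doit Ha Hg E1 E2 (-1,0,(l+3*n+2) + (3*m-1) + (-n-m)) (0,-1,-n-m) (0,0,0).
  - assert (Hd : ~ (3 | 3*m + 1)) by (intro X; apply Hdv in X; lia).
    split; intro Hc; [|exfalso; apply Hc; left; exact Hd].
    doit Ha Hg E1 E2 (1,0,(l+3*n+tau) - (3*m+1) + ((l + 3*n + tau - (3*m+1)) - (l + (3*m+1)))*(3*m*m+2*m)) (0,1,((l + 3*n + tau - (3*m+1)) - (l + (3*m+1)))*(3*m*m+2*m)) (0,-(((l + 3*n + tau - (3*m+1)) - (l + (3*m+1)))*(3*m+1)),0).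
  - assert (Hd : ~ (3 | 3*m + 2)) by (intro X; apply Hdv in X; lia).
    split; intro Hc; [|exfalso; apply Hc; left; exact Hd].
    doit Ha Hg E1 E2 (1,0,(l+3*n+tau) - (3*m+2) + ((l + 3*n + tau - (3*m+2)) - (l + (3*m+2)))*(3*m*m+4*m+1)) (0,1,((l + 3*n + tau - (3*m+2)) - (l + (3*m+2)))*(3*m*m+4*m+1)) (0,-(((l + 3*n + tau - (3*m+2)) - (l + (3*m+2)))*(3*m+2)),0).
Qed.

Definition V3 : Type := (Z * Z * Z)%type.
Definition M3 : Type := (V3 * V3 * V3)%type.

Definition bil (m : M3) (v w : V3) : Z :=
  let '((m11,m12,m13),(m21,m22,m23),(m31,m32,m33)) := m in
  let '(v1,v2,v3) := v in let '(w1,w2,w3) := w in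
  v1*(m11*w1 + m12*w2 + m13*w3) + v2*(m21*w1 + m22*w2 + m23*w3) + v3*(m31*w1 + m32*w2 + m33*w3).

Definition pm (m : M3) (v : V3) : V3 :=
  let '((m11,m12,m13),(m21,m22,m23),(m31,m32,m33)) := m in
  let '(v1,v2,v3) := v in
  (m11*v1 + m12*v2 + m13*v3, m21*v1 + m22*v2 + m23*v3, m31*v1 + m32*v2 + m33*v3).

Definition det3 (m : M3) : Z :=
  let '((m11,m12,m13),(m21,m22,m23),(m31,m32,m33)) := m in
  m11*(m22*m33 - m23*m32) - m12*(m21*m33 - m23*m31) + m13*(m21*m32 - m22*m31).

Definition adj3 (m : M3) : M3 :=
  let '((m11,m12,m13),(m21,m22,m23),(m31,m32,m33)) := m in
  ((m22*m33 - m23*m32, m13*m32 - m12*m33, m12*m23 - m13*m22),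
   (m23*m31 - m21*m33, m11*m33 - m13*m31, m13*m21 - m11*m23),
   (m21*m32 - m22*m31, m12*m31 - m11*m32, m11*m22 - m12*m21)).

Definition e1 : V3 := (1,0,0).
Definition e2 : V3 := (0,1,0).
Definition e3 : V3 := (0,0,1).

Definition cf (b b' p : M3) (v w : V3) : Z := bil b' (pm p v) (pm p w) - bil b v w.

Definition qfun (b b' p : M3) (v : V3) : Z :=
  let '(v1,v2,v3) := v in
  cf b b' p e1 e1 * D v1 + cf b b' p e2 e2 * D v2 + cf b b' p e3 e3 * D v3 +
  cf b b' p e1 e2 * (v1*v2) + cf b b' p e1 e3 * (v1*v3) + cf b b' p e2 e3 * (v2*v3).

Definition qmul (b : M3) (x y : G) : G :=
  let '((a,b1,c),n) := x in let '((a',b1',c'),n') := y in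
  ((a+a', b1+b1', c + c' + bil b (a,b1,n) (a',b1',n')), n+n').

Definition vadd (v w : V3) : V3 := let '(v1,v2,v3) := v in let '(w1,w2,w3) := w in (v1+w1,v2+w2,v3+w3).

Ltac dM p := let a := fresh "p" in let b := fresh "p" in let c := fresh "p" in
  let d := fresh "p" in let e := fresh "p" in let f := fresh "p" in
  let g := fresh "p" in let h := fresh "p" in let i := fresh "p" in
  destruct p as [[[[a b] c] [[d e] f]] [[g h] i]].
Ltac dV v := let a := fresh "v" in let b := fresh "v" in let c := fresh "v" in destruct v as [[a b] c].

Lemma pm_adj p v : det3 p = 1 -> pm (adj3 p) (pm p v) = v.
Proof. intro Hd. assert (E : pm (adj3 p) (pm p v) = (let '(v1,v2,v3) := v in (det3 p * v1, det3 p * v2, det3 p * v3))).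
  { dM p. dV v. cbn. teq; ring. }
  rewrite E, Hd. dV v. teq; ring. Qed.

Lemma adj_pm p v : det3 p = 1 -> pm p (pm (adj3 p) v) = v.
Proof. intro Hd. assert (E : pm p (pm (adj3 p) v) = (let '(v1,v2,v3) := v in (det3 p * v1, det3 p * v2, det3 p * v3))).
  { dM p. dV v. cbn. teq; ring. }
  rewrite E, Hd. dV v. teq; ring. Qed.

Lemma cf_expand b b' p v1 v2 v3 w1 w2 w3 : cf b b' p (v1,v2,v3) (w1,w2,w3) =
  cf b b' p e1 e1 * v1 * w1 + cf b b' p e1 e2 * v1 * w2 + cf b b' p e1 e3 * v1 * w3 +
  cf b b' p e2 e1 * v2 * w1 + cf b b' p e2 e2 * v2 * w2 + cf b b' p e2 e3 * v2 * w3 +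
  cf b b' p e3 e1 * v3 * w1 + cf b b' p e3 e2 * v3 * w2 + cf b b' p e3 e3 * v3 * w3.
Proof. dM b. dM b'. dM p. unfold cf, bil, pm, e1, e2, e3. ring. Qed.

Lemma cf_q b b' p v w : cf b b' p e1 e2 = cf b b' p e2 e1 -> cf b b' p e1 e3 = cf b b' p e3 e1 ->
  cf b b' p e2 e3 = cf b b' p e3 e2 ->
  cf b b' p v w = qfun b b' p (vadd v w) - qfun b b' p v - qfun b b' p w.
Proof. intros H12 H13 H23. dV v. dV w. rewrite cf_expand. rewrite <- H12, <- H13, <- H23.
  unfold qfun, vadd. rewrite !D_add. ring. Qed.

Lemma qiso b b' p : det3 p = 1 -> cf b b' p e1 e2 = cf b b' p e2 e1 -> cf b b' p e1 e3 = cf b b' p e3 e1 ->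
  cf b b' p e2 e3 = cf b b' p e3 e2 -> iso (qmul b) (qmul b').
Proof. intros Hd H12 H13 H23.
  exists (fun x => let '((a,b1,c),n) := x in let '(x1,x2,x3) := pm p (a,b1,n) in
                   ((x1,x2, c + qfun b b' p (a,b1,n)), x3)). split.
  - intros [[[a1 b1] c1] n1] [[[a2 b2] c2] n2].
    pose proof (cf_q b b' p (a1,b1,n1) (a2,b2,n2) H12 H13 H23) as K. unfold cf in K.
    cbn [qmul vadd] in *.
    assert (Pl : pm p (a1+a2, b1+b2, n1+n2) = vadd (pm p (a1,b1,n1)) (pm p (a2,b2,n2))).
    { dM p. cbn. teq; ring. }
    rewrite Pl. destruct (pm p (a1,b1,n1)) as [[x1 x2] x3]. destruct (pm p (a2,b2,n2)) as [[y1 y2] y3].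
    cbn [vadd qmul]. f_equal. teq; try ring. lia.
  - exists (fun y => let '((a,b1,c),n) := y in let '(y1,y2,y3) := pm (adj3 p) (a,b1,n) in
                   ((y1,y2, c - qfun b b' p (y1,y2,y3)), y3)). split.
    + intros [[[a b1] c] n]. pose proof (pm_adj p (a,b1,n) Hd) as E.
      destruct (pm p (a,b1,n)) as [[x1 x2] x3] eqn:Ex. rewrite E. apply (f_equal2 pair); [teq; ring|reflexivity].
    + intros [[[a b1] c] n]. pose proof (adj_pm p (a,b1,n) Hd) as E.
      destruct (pm (adj3 p) (a,b1,n)) as [[x1 x2] x3] eqn:Ex. rewrite E. apply (f_equal2 pair); [teq; ring|reflexivity].
Qed.

Lemma iso_ext m1 m1' m2 m2' : (forall x y, m1 x y = m1' x y) -> (forall x y, m2 x y = m2' x y) ->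
  iso m1 m2 -> iso m1' m2'.
Proof. intros E1 E2 [f [Hf Hg]]. exists f. split; [|exact Hg]. intros x y. rewrite <- E1, <- E2. apply Hf. Qed.

Lemma iterZ_id S T n h : (forall x, S x = x) -> (forall x, T x = x) -> iterZ S T n h = h.
Proof. intros HS HT. destruct n as [|p|p]; simpl; [reflexivity| |];
  apply Pos.iter_invariant; auto; congruence. Qed.

Definition B0 (r0 : Z) : M3 := ((0,0,0),(-r0,0,0),(0,0,0)).
Definition Bsrc (r k l : Z) : M3 := ((0,0,0),(-r,0,0),(k,l,0)).

Lemma L1_S r0 x : lab_S L1 r0 x = x.
Proof. rewrite lab_S_eq. dH x. cbn [lab_u lab_v]. rewrite phi_eq. teq; ring. Qed.
Lemma L1_T r0 x : lab_T L1 r0 x = x.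
Proof. rewrite lab_T_eq. dH x. cbn [lab_u lab_v]. unfold inv_u, inv_v. cbn [hx hy hz].
  rewrite (phi_eq r0 1 0 0 0 1 0 1 (-0) 0), (phi_eq r0 1 0 0 0 1 0 (-0) 1 0). cbn [hz]. rewrite phi_eq. teq; ring. Qed.

Lemma L1_q r0 x y : Lgrp L1 r0 x y = qmul (B0 r0) x y.
Proof. unfold Lgrp. destruct x as [[[a b] c] n]. destruct y as [[[a' b'] c'] n'].
  cbn [sdmul]. rewrite iterZ_id by (apply L1_S || apply L1_T). cbn [qmul B0 bil]. rewrite hmul_eq. f_equal. teq; ring. Qed.

Lemma src_S r k l S T a b c : haut r S T -> S ga = ga -> S al = (1,0,k) -> S be = (0,1,l) ->
  S (a,b,c) = (a,b,c+k*a+l*b).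
Proof. intros Ha Hg E1 E2. rewrite (hom_decomp r r S a b c (haut_S_hom _ _ _ Ha)), Hg, E1, E2.
  unfold ga. hsimpl. teq; ring. Qed.

Lemma src_T r k l S T a b c : haut r S T -> S ga = ga -> S al = (1,0,k) -> S be = (0,1,l) ->
  T (a,b,c) = (a,b,c-k*a-l*b).
Proof. intros Ha Hg E1 E2. pose proof Ha as [_ [HTS _]].
  rewrite <- (HTS (a,b,c-k*a-l*b)). rewrite (src_S r k l S T) by auto. f_equal. teq; ring. Qed.

Lemma src_iter r k l S T n a b c : haut r S T -> S ga = ga -> S al = (1,0,k) -> S be = (0,1,l) ->
  iterZ S T n (a,b,c) = (a,b,c+n*(k*a+l*b)).
Proof. intros Ha Hg E1 E2. pose proof Ha as [_ [HTS HST]]. induction n using Z.peano_ind.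
  - simpl. teq; ring.
  - rewrite iterZ_succ, IHn by auto. rewrite (src_S r k l S T) by auto. unfold Z.succ. teq; ring.
  - rewrite iterZ_pred, IHn by auto. rewrite (src_T r k l S T) by auto. unfold Z.pred. teq; ring.
Qed.

Lemma src_q r k l S T x y : haut r S T -> S ga = ga -> S al = (1,0,k) -> S be = (0,1,l) ->
  sdmul r S T x y = qmul (Bsrc r k l) x y.
Proof. intros Ha Hg E1 E2. destruct x as [[[a b] c] n]. destruct y as [[[a' b'] c'] n'].
  cbn [sdmul]. rewrite (src_iter r k l S T) by auto. cbn [qmul Bsrc bil]. rewrite hmul_eq. f_equal. teq; ring. Qed.

Lemma case_i r k l S T : 0 < r -> haut r S T -> S ga = ga -> S al = (1,0,k) -> S be = (0,1,l) ->
  iso (sdmul r S T) (Lgrp L1 (Z.gcd (Z.gcd r k) l)).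
Proof. intros Hr Ha Hg E1 E2.
  apply (iso_ext (qmul (Bsrc r k l)) _ (qmul (B0 (Z.gcd (Z.gcd r k) l))) _).
  { intros; symmetry; apply (src_q r k l S T); auto. }
  { intros; symmetry; apply L1_q. }
  rewrite <- Z.gcd_assoc.
  destruct (Z.eq_dec (Z.gcd k l) 0) as [Hz|Hz].
  - apply Z.gcd_eq_0 in Hz. destruct Hz; subst k l. rewrite Z.gcd_0_r, Z.abs_eq by lia. apply iso_refl.
  - set (g1 := Z.gcd k l) in *.
    destruct (Z.gcd_divide_l k l) as [k' Hk]. destruct (Z.gcd_divide_r k l) as [l' Hl]. fold g1 in Hk, Hl.
    destruct (Z.gcd_bezout k l g1 eq_refl) as [x [y Hxy]].
    assert (Hb : k' * x + l' * y = 1).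
    { apply (Z.mul_reg_l _ _ g1 Hz). rewrite Hk, Hl in Hxy. lia. }
    set (r0 := Z.gcd r g1).
    assert (Hr0 : 0 < r0). { pose proof (Z.gcd_nonneg r g1). assert (r0 <> 0); [|lia].
      intro E. apply Z.gcd_eq_0 in E. lia. }
    destruct (Z.gcd_divide_l r g1) as [r' Hr']. destruct (Z.gcd_divide_r r g1) as [g' Hg'].
    fold r0 in Hr', Hg'.
    destruct (Z.gcd_bezout r g1 r0 eq_refl) as [s [t Hst]].
    assert (Hb2 : s * r' + t * g' = 1).
    { apply (Z.mul_reg_l _ _ r0); [lia|]. rewrite Hr', Hg' in Hst. lia. }
    clearbody r0 g1. subst k l r g1.
    apply (qiso _ _ ((k', l', 0), (-(r'*y), r'*x, -g'), (-(t*y), t*x, s))).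
    + cbn [det3]. transitivity ((t*g' + s*r') * (k'*x + l'*y)); [ring|]. rewrite Hb. lia.
    + unfold cf, bil, pm, e1, e2, e3, B0, Bsrc.
      match goal with |- ?L = ?R => assert (E : L - R = r0 * r' * (k'*x + l'*y - 1)) by ring end.
      rewrite Hb in E. lia.
    + unfold cf, bil, pm, e1, e2, e3, B0, Bsrc. ring.
    + unfold cf, bil, pm, e1, e2, e3, B0, Bsrc. ring.
Qed.

Open Scope R_scope.

Lemma rot_facts m11 m12 m21 m22 : conj_to_rotation m11 m12 m21 m22 ->
  (m11*m22 - m12*m21 = 1)%Z /\ (-2 <= m11 + m22 <= 2)%Z /\
  ((m11 + m22 = 2)%Z -> m11 = 1%Z /\ m12 = 0%Z /\ m21 = 0%Z /\ m22 = 1%Z) /\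
  ((m11 + m22 = -2)%Z -> m11 = (-1)%Z /\ m12 = 0%Z /\ m21 = 0%Z /\ m22 = (-1)%Z).
Proof. intros [p11 [p12 [p21 [p22 [t [Hd [Q1 [Q2 [Q3 Q4]]]]]]]]].
  set (a := IZR m11) in *. set (b := IZR m12) in *. set (c := IZR m21) in *. set (d := IZR m22) in *.
  set (co := cos t) in *. set (si := sin t) in *.
  assert (Hcs : si * si + co * co = 1) by (unfold si, co; pose proof (sin2_cos2 t) as X; unfold Rsqr in X; lra).
  set (dP := p11 * p22 - p12 * p21) in *.
  assert (Det : dP * (a*d - b*c) = dP).
  { transitivity ((p11*a + p12*c)*(p21*b + p22*d) - (p11*b + p12*d)*(p21*a+p22*c)); [unfold dP; ring|].
    rewrite Q1, Q2, Q3, Q4. transitivity (dP * (si*si + co*co)); [unfold dP; ring|]. rewrite Hcs. ring. }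
  assert (Tr : dP * (a + d) = dP * (2 * co)).
  { transitivity ((p11*a + p12*c)*p22 - (p11*b + p12*d)*p21 - (p21*a+p22*c)*p12 + (p21*b + p22*d)*p11);
      [unfold dP; ring|].
    rewrite Q1, Q2, Q3, Q4. unfold dP; ring. }
  assert (Det1 : a*d - b*c = 1).
  { apply (Rmult_eq_reg_l dP); [|exact Hd]. rewrite Det. ring. }
  assert (Tr1 : a + d = 2 * co).
  { apply (Rmult_eq_reg_l dP); [|exact Hd]. exact Tr. }
  assert (Dz : (m11*m22 - m12*m21 = 1)%Z).
  { apply eq_IZR. rewrite minus_IZR, !mult_IZR. exact Det1. }
  pose proof (COS_bound t) as [Cb1 Cb2]. fold co in Cb1, Cb2.
  assert (Trz : IZR (m11 + m22) = 2 * co) by (rewrite plus_IZR; exact Tr1).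
  split; [exact Dz|split].
  { split; apply le_IZR; rewrite Trz; lra. }
  assert (Gen : forall eps, co = eps -> si = 0 -> (a = eps /\ b = 0 /\ c = 0 /\ d = eps)).
  { intros eps Hc Hs. rewrite Hc, Hs in *.
    assert (E1 : dP * (a - eps) = p22*(p11*a + p12*c - eps*p11) - p12*(p21*a + p22*c - eps*p21)) by (unfold dP; ring).
    assert (E2 : dP * b = p22*(p11*b + p12*d - eps*p12) - p12*(p21*b + p22*d - eps*p22)) by (unfold dP; ring).
    assert (E3 : dP * c = p11*(p21*a + p22*c - eps*p21) - p21*(p11*a + p12*c - eps*p11)) by (unfold dP; ring).
    assert (E4 : dP * (d - eps) = p11*(p21*b + p22*d - eps*p22) - p21*(p11*b + p12*d - eps*p12)) by (unfold dP; ring).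
    rewrite Q1, Q3 in E1, E3. rewrite Q2, Q4 in E2, E4.
    assert (Z1 : dP * (a - eps) = dP * 0) by (rewrite E1; ring).
    assert (Z2 : dP * b = dP * 0) by (rewrite E2; ring).
    assert (Z3 : dP * c = dP * 0) by (rewrite E3; ring).
    assert (Z4 : dP * (d - eps) = dP * 0) by (rewrite E4; ring).
    apply Rmult_eq_reg_l in Z1; auto. apply Rmult_eq_reg_l in Z2; auto.
    apply Rmult_eq_reg_l in Z3; auto. apply Rmult_eq_reg_l in Z4; auto.
    repeat split; lra. }
  split.
  - intro E. assert (co = 1) by (rewrite E in Trz; simpl in Trz; lra).
    assert (si = 0) by nra. destruct (Gen 1 H H0) as [X1 [X2 [X3 X4]]].
    repeat split; apply eq_IZR; auto.
  - intro E. assert (co = -1) by (rewrite E in Trz; simpl in Trz; lra).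
    assert (si = 0) by nra. destruct (Gen (-1) H H0) as [X1 [X2 [X3 X4]]].
    repeat split; apply eq_IZR; auto.
Qed.

Close Scope R_scope.

Definition M2 : Type := (Z * Z * Z * Z)%type.
Definition mmul (x y : M2) : M2 :=
  let '(a,b,c,d) := x in let '(a',b',c',d') := y in
  (a*a' + b*c', a*b' + b*d', c*a' + d*c', c*b' + d*d').
Definition adj2 (x : M2) : M2 := let '(a,b,c,d) := x in (d, -b, -c, a).
Definition det2 (x : M2) : Z := let '(a,b,c,d) := x in a*d - b*c.
Definition conj2 (g m : M2) : M2 := mmul (mmul g m) (adj2 g).

Lemma conj2_comp g1 g2 m : conj2 g2 (conj2 g1 m) = conj2 (mmul g2 g1) m.
Proof. destruct g1 as [[[a b] c] d]. destruct g2 as [[[a' b'] c'] d']. destruct m as [[[x y] z] w].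
  unfold conj2, mmul, adj2. f_equal; [f_equal; [f_equal|]|]; ring. Qed.
Lemma det2_mul g1 g2 : det2 (mmul g2 g1) = det2 g2 * det2 g1.
Proof. destruct g1 as [[[a b] c] d]. destruct g2 as [[[a' b'] c'] d']. unfold det2, mmul. ring. Qed.

Definition Target (tau : Z) (N : M2) : Prop :=
  (tau = -1 /\ (N = (0,-1,1,-1) \/ N = (-1,1,-1,0))) \/
  (tau = 0 /\ (N = (0,-1,1,0) \/ N = (0,1,-1,0))) \/
  (tau = 1 /\ (N = (1,-1,1,0) \/ N = (0,1,-1,1))).

Lemma round c z : c <> 0 -> exists t, Z.abs (z + 2*t*c) <= Z.abs c.
Proof. intro Hc. set (w := Z.abs c). assert (Hw : 0 < w) by (unfold w; lia).
  pose proof (Z_div_mod_eq_full z (2*w)). pose proof (Z.mod_pos_bound z (2*w) ltac:(lia)).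
  set (q := z / (2*w)) in *. set (rho := z mod (2*w)) in *.
  assert (Hsg : c = w \/ c = - w) by (unfold w; lia).
  destruct (Z_le_gt_dec rho w).
  - destruct Hsg as [Hs|Hs]; [exists (-q)|exists q]; rewrite Hs; unfold w at 1; lia.
  - destruct Hsg as [Hs|Hs]; [exists (-(q+1))|exists (q+1)]; rewrite Hs; unfold w at 1; lia.
Qed.

Lemma red_base a b c d tau : a*d - b*c = 1 -> a + d = tau -> -1 <= tau <= 1 ->
  Z.abs (2*a - tau) <= Z.abs c -> Z.abs c <= Z.abs b -> c <> 0 ->
  exists g, det2 g = 1 /\ Target tau (conj2 g (a,b,c,d)).
Proof. intros Hd Ht Htau Hu Hb Hc.
  assert (Hc1 : c = 1 \/ c = -1).
  { assert (E : 4*(b*c) = -((2*a - tau)*(2*a-tau)) + tau*tau - 4) by (subst; nia).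
    assert ((2*a-tau)*(2*a-tau) <= c*c) by nia.
    assert (c*c <= Z.abs (b*c)) by (rewrite Z.abs_mul; nia).
    nia. }
  assert (Ha : (a = -1 \/ a = 0 \/ a = 1)) by lia.
  assert (Htau3 : tau = -1 \/ tau = 0 \/ tau = 1) by lia.
  destruct Hc1 as [->| ->]; destruct Ha as [->|[->| ->]]; destruct Htau3 as [->|[->| ->]];
    try lia; match goal with Ht : ?x + d = ?y |- _ => assert (d = y - x) by lia end; subst d; simpl in *;
    first [assert (b = 1) by lia | assert (b = -1) by lia | assert (b = 0) by lia]; subst b;
    first [ exists (1,0,0,1); split; [reflexivity|]; unfold Target; vm_compute; tauto
          | exists (1,1,0,1); split; [reflexivity|]; unfold Target; vm_compute; tauto ].
Qed.

Lemma red n : forall a b c d tau, Z.abs c <= Z.of_nat n -> a*d - b*c = 1 -> a + d = tau -> -1 <= tau <= 1 ->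
  exists g, det2 g = 1 /\ Target tau (conj2 g (a,b,c,d)).
Proof. induction n as [|n IH]; intros a b c d tau Hn Hd Ht Htau.
  - assert (c = 0) by lia. subst c. exfalso.
    assert (a*d = 1) by lia. destruct (Z.eq_mul_1 a d H) as [->| ->]; lia.
  - destruct (Z.eq_dec c 0) as [->|Hc].
    + exfalso. assert (a*d = 1) by lia. destruct (Z.eq_mul_1 a d H) as [->| ->]; lia.
    + destruct (round c (2*a - tau) Hc) as [t Hr].
      set (E := (1,t,0,1) : M2).
      set (a1 := a + t*c). set (b1 := b + t*(d - a) - t*t*c). set (d1 := d - t*c).
      assert (HE : conj2 E (a,b,c,d) = (a1,b1,c,d1)).
      { unfold conj2, E, mmul, adj2, a1, b1, d1. f_equal; [f_equal; [f_equal|]|]; ring. }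
      assert (Hd1 : a1*d1 - b1*c = 1) by (unfold a1, b1, d1; nia).
      assert (Ht1 : a1 + d1 = tau) by (unfold a1, d1; lia).
      assert (Hr1 : Z.abs (2*a1 - tau) <= Z.abs c) by (unfold a1; replace (2*(a+t*c) - tau) with (2*a - tau + 2*t*c) by ring; exact Hr).
      destruct (Z_lt_le_dec (Z.abs b1) (Z.abs c)) as [Hlt|Hge].
      * set (W := (0,-1,1,0) : M2).
        assert (HW : conj2 W (a1,b1,c,d1) = (d1,-c,-b1,a1)).
        { unfold conj2, W, mmul, adj2. f_equal; [f_equal; [f_equal|]|]; ring. }
        destruct (IH d1 (-c) (-b1) a1 tau) as [g [Hg HT]]; [lia|nia|lia|lia|].
        exists (mmul g (mmul W E)). split.
        -- rewrite !det2_mul, Hg. unfold det2, W, E. ring.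
        -- rewrite <- !conj2_comp, HE, HW. exact HT.
      * destruct (red_base a1 b1 c d1 tau Hd1 Ht1 Htau Hr1 Hge Hc) as [g [Hg HT]].
        exists (mmul g E). split.
        -- rewrite det2_mul, Hg. unfold det2, E. ring.
        -- rewrite <- conj2_comp, HE. exact HT.
Qed.

Lemma red_all a b c d : a*d - b*c = 1 -> -1 <= a + d <= 1 ->
  exists g, det2 g = 1 /\ Target (a + d) (conj2 g (a,b,c,d)).
Proof. intros. apply (red (Z.to_nat (Z.abs c))); auto. lia. Qed.

Lemma hom_lin r f a b c : hhom r r f -> f ga = ga ->
  hx (f (a,b,c)) = a * hx (f al) + b * hx (f be) /\ hy (f (a,b,c)) = a * hy (f al) + b * hy (f be).
Proof. intros Hf Hg. rewrite (hom_decomp r r f a b c Hf), Hg.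
  destruct (f al) as [[x1 x2] x3]. destruct (f be) as [[y1 y2] y3]. unfold ga. hsimpl. cbn. split; ring. Qed.

Lemma S_center r S T : 0 < r -> haut r S T -> exists e, S ga = (0,0,e).
Proof. intros Hr Ha. pose proof (haut_S_hom _ _ _ Ha) as Hs. pose proof Ha as [_ [_ HST]].
  assert (C : forall x, hmul r (S ga) (S x) = hmul r (S x) (S ga)).
  { intro x. rewrite <- !Hs. f_equal. dH x. unfold ga. hsimpl. teq; ring. }
  pose proof (C (T al)) as C1. pose proof (C (T be)) as C2. rewrite HST in C1, C2.
  destruct (S ga) as [[z1 z2] z3]. unfold al, be in *. hsimpl.
  injection C1. injection C2. intros. exists z3. assert (z1 = 0) by nia. assert (z2 = 0) by nia. subst. reflexivity.
Qed.

Lemma S_ga_det r S T e : 0 < r -> haut r S T -> S ga = (0,0,e) ->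
  e = hx (S al) * hy (S be) - hy (S al) * hx (S be).
Proof. intros Hr Ha Hg. pose proof (haut_S_hom _ _ _ Ha) as Hs.
  assert (E : hmul r al be = hmul r (hpow r ga r) (hmul r be al)) by (unfold al, be, ga; hsimpl; teq; ring).
  apply (f_equal S) in E. rewrite !Hs, (hom_pow r r S ga r Hs), Hg in E.
  destruct (S al) as [[x1 x2] x3]. destruct (S be) as [[y1 y2] y3]. hsimpl. cbn.
  injection E. intros E3 _ _. rewrite ?D_0 in E3.
  assert (X : r * (e - (x1*y2 - x2*y1)) = 0) by (ring_simplify in E3; ring_simplify; lia).
  apply Z.mul_eq_0 in X. lia. Qed.

Lemma inv_lin r S T n11 n12 n21 n22 k l : haut r S T -> S ga = ga ->
  S al = (n11,n21,k) -> S be = (n12,n22,l) -> n11*n22 - n12*n21 = 1 ->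
  T ga = ga /\ hx (T al) = n22 /\ hy (T al) = - n21 /\ hx (T be) = - n12 /\ hy (T be) = n11.
Proof. intros Ha Hg E1 E2 Hd. pose proof Ha as [_ [HTS HST]].
  pose proof (haut_S_hom _ _ _ Ha) as Hs.
  assert (Tg : T ga = ga) by (rewrite <- Hg at 1; apply HTS).
  split; [exact Tg|].
  destruct (T al) as [[p q] z] eqn:Ea. destruct (T be) as [[p' q'] z'] eqn:Eb.
  pose proof (hom_lin r S p q z Hs Hg) as [L1 L2]. pose proof (hom_lin r S p' q' z' Hs Hg) as [L3 L4].
  rewrite <- Ea, HST in L1, L2. rewrite <- Eb, HST in L3, L4. rewrite E1, E2 in *. cbn in *.
  assert (X1 : p = n22*(p*n11 + q*n12) - n12*(p*n21 + q*n22)) by (transitivity (p * (n11*n22 - n12*n21)); [rewrite Hd; ring|ring]).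
  assert (X2 : q = n11*(p*n21 + q*n22) - n21*(p*n11 + q*n12)) by (transitivity (q * (n11*n22 - n12*n21)); [rewrite Hd; ring|ring]).
  assert (X3 : p' = n22*(p'*n11 + q'*n12) - n12*(p'*n21 + q'*n22)) by (transitivity (p' * (n11*n22 - n12*n21)); [rewrite Hd; ring|ring]).
  assert (X4 : q' = n11*(p'*n21 + q'*n22) - n21*(p'*n11 + q'*n12)) by (transitivity (q' * (n11*n22 - n12*n21)); [rewrite Hd; ring|ring]).
  rewrite <- L1, <- L2 in X1, X2. rewrite <- L3, <- L4 in X3, X4. lia.
Qed.

Lemma transport r S T g11 g12 g21 g22 : haut r S T -> S ga = ga -> g11*g22 - g12*g21 = 1 ->
  exists S' T', haut r S' T' /\ iso (sdmul r S T) (sdmul r S' T') /\ S' ga = ga /\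
    (let '(n11,n12,n21,n22) := conj2 (g11,g12,g21,g22) (hx (S al), hx (S be), hy (S al), hy (S be)) in
     hx (S' al) = n11 /\ hy (S' al) = n21 /\ hx (S' be) = n12 /\ hy (S' be) = n22).
Proof. intros Ha Hg Hd.
  set (u := (g11,g21,0) : H). set (v := (g12,g22,0) : H).
  assert (Hdet : hdet u v = 1) by (unfold hdet, u, v; cbn; lia).
  set (A := phi r u v). set (B := phi r (inv_u r u v) (inv_v r u v)).
  pose proof (phi_haut r u v Hdet) as HA. fold A B in HA. pose proof HA as [HAh [HBA HAB]].
  pose proof (haut_T_hom _ _ _ HA) as HBh.
  pose proof (haut_S_hom _ _ _ Ha) as HSh. pose proof (haut_T_hom _ _ _ Ha) as HTh.
  pose proof Ha as [_ [HTS HST]].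
  exists (fun x => A (S (B x))), (fun x => A (T (B x))). split; [|split; [|split]].
  - split; [|split].
    + intros x y. cbv beta. rewrite HBh, HSh, HAh. reflexivity.
    + intro x. cbv beta. rewrite HBA, HTS, HAB. reflexivity.
    + intro x. cbv beta. rewrite HBA, HST, HAB. reflexivity.
  - apply (iso_conj r r S T _ _ A B hone); auto.
    + split; [|split].
      * intros x y. cbv beta. rewrite HBh, HSh, HAh. reflexivity.
      * intro x. cbv beta. rewrite HBA, HTS, HAB. reflexivity.
      * intro x. cbv beta. rewrite HBA, HST, HAB. reflexivity.
    + intro h. cbv beta. rewrite HBA, hmul_1_l, hmul_1_r. reflexivity.
  - unfold A, B. rewrite phi_ga, Hg, phi_ga. reflexivity.
  - assert (Bal : B al = inv_u r u v) by (unfold B; apply phi_al).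
    assert (Bbe : B be = inv_v r u v) by (unfold B; apply phi_be).
    assert (Sg : S ga = ga) by exact Hg.
    destruct (inv_u r u v) as [[p q] z] eqn:Eu. destruct (inv_v r u v) as [[p' q'] z'] eqn:Ev.
    assert (Hp : p = g22 /\ q = - g21) by (unfold inv_u in Eu; cbn in Eu; injection Eu; intros; subst; lia).
    assert (Hp' : p' = - g12 /\ q' = g11) by (unfold inv_v in Ev; cbn in Ev; injection Ev; intros; subst; lia).
    destruct Hp as [-> ->]. destruct Hp' as [-> ->].
    rewrite Bal, Bbe.
    pose proof (hom_lin r S g22 (-g21) z HSh Hg) as [L1 L2].
    pose proof (hom_lin r S (-g12) g11 z' HSh Hg) as [L3 L4].
    destruct (S (g22, -g21, z)) as [[s1 s2] s3]. destruct (S (-g12, g11, z')) as [[t1 t2] t3].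
    unfold A, u, v. rewrite !phi_eq. cbn [hx hy] in *.
    destruct (S al) as [[m11 m21] m3]. destruct (S be) as [[m12 m22] m3']. cbn [hx hy] in *.
    subst s1 s2 t1 t2. unfold conj2, mmul, adj2. repeat split; ring.
Qed.

Definition EX (m : G -> G -> G) : Prop := exists (i : lab) (s : Z), lab_valid i s /\ iso m (Lgrp i s).

Lemma EX_iso m m' : iso m m' -> EX m' -> EX m.
Proof. intros I [i [s [V J]]]. exists i, s. split; auto. eapply iso_trans; eauto. Qed.

Lemma eta_H x : x = (hx x, hy x, hz x). Proof. dH x. reflexivity. Qed.

Lemma fin_i r S T k l : 0 < r -> haut r S T -> S ga = ga -> S al = (1,0,k) -> S be = (0,1,l) -> EX (sdmul r S T).
Proof. intros. exists L1, (Z.gcd (Z.gcd r k) l). split; [|apply case_i; auto].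
  split; [|exact I]. pose proof (Z.gcd_nonneg (Z.gcd r k) l).
  assert (Z.gcd (Z.gcd r k) l <> 0); [|lia]. intro E. apply Z.gcd_eq_0 in E. destruct E as [E _].
  apply Z.gcd_eq_0 in E. lia. Qed.

Lemma fin_ii r S T k l : 0 < r -> haut r S T -> S ga = ga -> S al = (-1,0,k) -> S be = (0,-1,l) -> EX (sdmul r S T).
Proof. intros Hr Ha Hg E1 E2. destruct (case_ii r k l S T Ha Hg E1 E2) as [X Y].
  destruct (classic (Z.Odd r \/ (Z.Even k /\ Z.Even l))) as [C|C].
  - exists L2, r. split; [split; [exact Hr|exact I]|auto].
  - exists L2p, r. split; [|auto]. split; [exact Hr|]. cbn.
    destruct (Z.Even_or_Odd r) as [Ev|Od]; [exact Ev|exfalso; tauto]. Qed.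

Lemma fin_iii r S T k l : 0 < r -> haut r S T -> S ga = ga -> S al = (0,1,k) -> S be = (-1,-1,l) -> EX (sdmul r S T).
Proof. intros Hr Ha Hg E1 E2. destruct (case_iii r k l S T Ha Hg E1 E2) as [X Y].
  destruct (classic (~ (3 | r) \/ k mod 3 = l mod 3)) as [C|C].
  - exists L3, r. split; [split; [exact Hr|exact I]|auto].
  - exists L3p, r. split; [|auto]. split; [exact Hr|]. cbn.
    apply NNPP. intro N. apply C. left. exact N. Qed.

Lemma fin_iv r S T k l : 0 < r -> haut r S T -> S ga = ga -> S al = (0,1,k) -> S be = (-1,0,l) -> EX (sdmul r S T).
Proof. intros Hr Ha Hg E1 E2. destruct (case_iv r k l S T Ha Hg E1 E2) as [X Y].
  destruct (classic (Z.Odd r \/ k mod 2 = l mod 2)) as [C|C].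
  - exists L4, r. split; [split; [exact Hr|exact I]|auto].
  - exists L4p, r. split; [|auto]. split; [exact Hr|]. cbn.
    destruct (Z.Even_or_Odd r) as [Ev|Od]; [exact Ev|exfalso; tauto]. Qed.

Lemma fin_v r S T k l : 0 < r -> haut r S T -> S ga = ga -> S al = (1,1,k) -> S be = (-1,0,l) -> EX (sdmul r S T).
Proof. intros Hr Ha Hg E1 E2. exists L6, r. split; [split; [exact Hr|exact I]|]. apply (case_v r k l); auto. Qed.

Lemma fin_rep r S T n11 n12 n21 n22 : 0 < r -> haut r S T -> S ga = ga ->
  hx (S al) = n11 -> hy (S al) = n21 -> hx (S be) = n12 -> hy (S be) = n22 ->
  Target (n11 + n22) (n11, n12, n21, n22) -> EX (sdmul r S T).
Proof. intros Hr Ha Hg X1 X2 X3 X4 HT.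
  pose proof (eta_H (S al)) as Ea. pose proof (eta_H (S be)) as Eb. rewrite X1, X2 in Ea. rewrite X3, X4 in Eb. clear X1 X2 X3 X4.
  assert (INV : forall a b c d, (n11,n12,n21,n22) = (a,b,c,d) -> a*d - b*c = 1 ->
      EX (sdmul r T S) -> EX (sdmul r S T)).
  { intros a b c d _ _ E. apply (EX_iso _ _ (iso_inv r S T) E). }
  pose proof (haut_sym _ _ _ Ha) as Ha'.
  destruct HT as [[_ [N|N]]|[[_ [N|N]]|[_ [N|N]]]]; injection N; intros; subst n11 n12 n21 n22.
  - exact (fin_iii r S T _ _ Hr Ha Hg Ea Eb).
  - destruct (inv_lin r S T _ _ _ _ _ _ Ha Hg Ea Eb eq_refl) as [Tg [Y1 [Y2 [Y3 Y4]]]].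
    apply (EX_iso _ _ (iso_inv r S T)). pose proof (eta_H (T al)) as Fa. pose proof (eta_H (T be)) as Fb.
    rewrite Y1, Y2 in Fa. rewrite Y3, Y4 in Fb. exact (fin_iii r T S _ _ Hr Ha' Tg Fa Fb).
  - exact (fin_iv r S T _ _ Hr Ha Hg Ea Eb).
  - destruct (inv_lin r S T _ _ _ _ _ _ Ha Hg Ea Eb eq_refl) as [Tg [Y1 [Y2 [Y3 Y4]]]].
    apply (EX_iso _ _ (iso_inv r S T)). pose proof (eta_H (T al)) as Fa. pose proof (eta_H (T be)) as Fb.
    rewrite Y1, Y2 in Fa. rewrite Y3, Y4 in Fb. exact (fin_iv r T S _ _ Hr Ha' Tg Fa Fb).
  - exact (fin_v r S T _ _ Hr Ha Hg Ea Eb).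
  - destruct (inv_lin r S T _ _ _ _ _ _ Ha Hg Ea Eb eq_refl) as [Tg [Y1 [Y2 [Y3 Y4]]]].
    apply (EX_iso _ _ (iso_inv r S T)). pose proof (eta_H (T al)) as Fa. pose proof (eta_H (T be)) as Fb.
    rewrite Y1, Y2 in Fa. rewrite Y3, Y4 in Fb. exact (fin_v r T S _ _ Hr Ha' Tg Fa Fb).
Qed.

Lemma part3 r S T : osc_data r S T -> EX (sdmul r S T).
Proof. intros [Hr [Ha Hrot]]. unfold sbar11, sbar12, sbar21, sbar22 in Hrot.
  destruct (rot_facts _ _ _ _ Hrot) as [Hdet [Hbd [H2 Hm2]]].
  destruct (S_center r S T Hr Ha) as [e He].
  pose proof (S_ga_det r S T e Hr Ha He) as Ee.
  assert (Hg : S ga = ga) by (rewrite He; unfold ga; f_equal; lia).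
  pose proof (eta_H (S al)) as Ea. pose proof (eta_H (S be)) as Eb.
  destruct (Z.eq_dec (hx (S al) + hy (S be)) 2) as [T2|T2].
  { destruct (H2 T2) as [A1 [A2 [A3 A4]]]. rewrite A1, A3 in Ea. rewrite A2, A4 in Eb.
    exact (fin_i r S T _ _ Hr Ha Hg Ea Eb). }
  destruct (Z.eq_dec (hx (S al) + hy (S be)) (-2)) as [Tm2|Tm2].
  { destruct (Hm2 Tm2) as [A1 [A2 [A3 A4]]]. rewrite A1, A3 in Ea. rewrite A2, A4 in Eb.
    exact (fin_ii r S T _ _ Hr Ha Hg Ea Eb). }
  destruct (red_all (hx (S al)) (hx (S be)) (hy (S al)) (hy (S be)) Hdet ltac:(lia)) as [[[[g11 g12] g21] g22] [Hgd HT]].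
  destruct (transport r S T g11 g12 g21 g22 Ha Hg Hgd) as [S' [T' [Ha' [Hi [Hg' Hl]]]]].
  apply (EX_iso _ _ Hi).
  destruct (conj2 (g11,g12,g21,g22) (hx (S al), hx (S be), hy (S al), hy (S be))) as [[[n11 n12] n21] n22] eqn:EN.
  destruct Hl as [X1 [X2 [X3 X4]]].
  assert (Tn : n11 + n22 = hx (S al) + hy (S be)).
  { revert EN. unfold conj2, mmul, adj2. intro EN. injection EN. intros E4 E3 E2 E1.
    rewrite <- E1, <- E4. transitivity ((g11*g22 - g12*g21) * (hx (S al) + hy (S be))); [ring|].
    unfold det2 in Hgd. rewrite Hgd. ring. }
  rewrite <- Tn in HT. try rewrite EN in HT.
  exact (fin_rep r S' T' _ _ _ _ Hr Ha' Hg' X1 X2 X3 X4 HT).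
Qed.

Lemma Zgrp : grp Z.add 0 Z.opp.
Proof. split; [|split; [|split; [|split]]]; intros; ring. Qed.

Lemma gpow_Z x n : gpow Z.add 0 Z.opp x n = n * x.
Proof. induction n using Z.peano_ind.
  - reflexivity.
  - rewrite gpow_succ by apply Zgrp. rewrite IHn. unfold Z.succ. ring.
  - rewrite gpow_pred by apply Zgrp. rewrite IHn. unfold Z.pred. ring.
Qed.

Lemma gpow_delta r S T n : haut r S T -> gpow (sdmul r S T) ge (gi r S T) (hone, 1) n = (hone, n).
Proof. intro Ha. pose proof (sd_grp _ _ _ Ha) as Gp. induction n using Z.peano_ind.
  - reflexivity.
  - rewrite gpow_succ, IHn by auto. cbn [sdmul]. rewrite (hom_one r r _ (iterZ_hom r S T n Ha)), hmul_1_l.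
    f_equal.
  - rewrite gpow_pred, IHn by auto. cbn [gi sdmul].
    assert (Hi : hinv r hone = hone) by (unfold hinv, hone; rewrite hpow_eq; teq; ring).
    rewrite Hi, (hom_one r r _ (iterZ_hom r S T (- (1)) Ha)).
    rewrite (hom_one r r _ (iterZ_hom r S T n Ha)), hmul_1_l. f_equal; try lia.
Qed.

Lemma hom_Z_form r S T (phi0 : G -> Z) : haut r S T ->
  (forall x y, phi0 (sdmul r S T x y) = phi0 x + phi0 y) ->
  forall h n, phi0 (h, n) = phi0 (h, 0) + n * phi0 (hone, 1).
Proof. intros Ha Hp h n.
  assert (E : (h, n) = sdmul r S T (h, 0) (hone, n)) by (cbn [sdmul iterZ]; rewrite hmul_1_r; reflexivity).
  rewrite E, Hp. f_equal. rewrite <- (gpow_delta r S T n Ha).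
  rewrite (grp_hom_pow _ _ _ _ _ _ phi0 (hone,1) n (sd_grp _ _ _ Ha) Zgrp Hp). apply gpow_Z. Qed.

Lemma conj_delta r S T h : sdmul r S T (hone, 1) (h, 0) = sdmul r S T (S h, 0) (hone, 1).
Proof. cbn [sdmul iterZ Pos.iter]. rewrite hmul_1_l, hmul_1_r. reflexivity. Qed.

Lemma Hpart_hom r S T (phi0 : G -> Z) : haut r S T ->
  (forall x y, phi0 (sdmul r S T x y) = phi0 x + phi0 y) ->
  forall x y, phi0 (hmul r x y, 0) = phi0 (x,0) + phi0 (y,0).
Proof. intros Ha Hp x y. rewrite <- Hp. reflexivity. Qed.

Lemma Hpart_pow r (psi : H -> Z) : (forall x y, psi (hmul r x y) = psi x + psi y) ->
  forall x n, psi (hpow r x n) = n * psi x.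
Proof. intros Hp x n. induction n using Z.peano_ind.
  - rewrite hpow_0. pose proof (Hp hone hone) as E. rewrite hmul_1_l in E. lia.
  - rewrite <- Z.add_1_r, hpow_add, Hp, IHn, hpow_1. ring.
  - assert (E : psi (hpow r x n) = psi (hpow r x (Z.pred n)) + psi x).
    { rewrite <- (hpow_1 r x) at 3. rewrite <- Hp, <- hpow_add. f_equal. f_equal. lia. }
    unfold Z.pred in *. rewrite Z.mul_add_distr_r. lia.
Qed.

Lemma Hpart_lin r (psi : H -> Z) a b c : (forall x y, psi (hmul r x y) = psi x + psi y) ->
  psi (a,b,c) = a * psi al + b * psi be + c * psi ga.
Proof. intro Hp. rewrite (h_decomp r a b c), !Hp, !(Hpart_pow r psi Hp). ring. Qed.

Lemma kills i r (phi0 : G -> Z) : i <> L1 -> 0 < r ->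
  (forall x y, phi0 (Lgrp i r x y) = phi0 x + phi0 y) -> forall h, phi0 (h, 0) = 0.
Proof. intros Hi Hr Hp.
  pose proof (lab_haut i r) as Ha.
  set (psi := fun h => phi0 (h, 0)).
  assert (Hps : forall x y, psi (hmul r x y) = psi x + psi y) by (intros; apply (Hpart_hom r _ _ _ Ha Hp)).
  assert (Hg : psi ga = 0).
  { assert (E : hmul r al be = hmul r (hpow r ga r) (hmul r be al)) by (unfold al, be, ga; hsimpl; teq; ring).
    apply (f_equal psi) in E. rewrite !Hps, (Hpart_pow r psi Hps) in E.
    assert (r * psi ga = 0) by lia. apply Z.mul_eq_0 in H. lia. }
  assert (Hc : forall h, psi (lab_S i r h) = psi h).
  { intro h. pose proof (conj_delta r (lab_S i r) (lab_T i r) h) as E. apply (f_equal phi0) in E.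
    unfold Lgrp in Hp. rewrite !Hp in E. unfold psi. lia. }
  pose proof (Hc al) as C1. pose proof (Hc be) as C2. rewrite lab_S_eq, phi_al in C1. rewrite lab_S_eq, phi_be in C2.
  assert (Z : psi al = 0 /\ psi be = 0).
  { destruct i; try congruence; cbn [lab_u lab_v] in C1, C2; rewrite (Hpart_lin r psi _ _ _ Hps) in C1; rewrite (Hpart_lin r psi _ _ _ Hps) in C2; rewrite Hg in C1, C2; lia. }
  intro h. fold (psi h). dH h. rewrite (Hpart_lin r psi _ _ _ Hps). destruct Z as [-> ->]. rewrite Hg. ring.
Qed.


Lemma not_iso_L1 i r s : i <> L1 -> 0 < r -> iso (Lgrp i r) (Lgrp L1 s) -> False.
Proof. intros Hi Hr [f [Hf [g [Hgf Hfg]]]].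
  set (pa := fun x : G => hx (fst (f x))). set (pb := fun x : G => hy (fst (f x))).
  assert (Ha : forall x y, pa (Lgrp i r x y) = pa x + pa y).
  { intros x y. unfold pa. rewrite Hf, L1_q. destruct (f x) as [[[a b] c] n]. destruct (f y) as [[[a' b'] c'] n']. reflexivity. }
  assert (Hb : forall x y, pb (Lgrp i r x y) = pb x + pb y).
  { intros x y. unfold pb. rewrite Hf, L1_q. destruct (f x) as [[[a b] c] n]. destruct (f y) as [[[a' b'] c'] n']. reflexivity. }
  pose proof (lab_haut i r) as Hl.
  pose proof (hom_Z_form r _ _ pa Hl Ha) as Fa. pose proof (hom_Z_form r _ _ pb Hl Hb) as Fb.
  pose proof (kills i r pa Hi Hr Ha) as Ka. pose proof (kills i r pb Hi Hr Hb) as Kb.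
  destruct (g ((1,0,0),0)) as [h1 n1] eqn:E1. destruct (g ((0,1,0),0)) as [h2 n2] eqn:E2.
  assert (A1 : pa (h1,n1) = 1) by (unfold pa; rewrite <- E1, Hfg; reflexivity).
  assert (B1 : pb (h1,n1) = 0) by (unfold pb; rewrite <- E1, Hfg; reflexivity).
  assert (B2 : pb (h2,n2) = 1) by (unfold pb; rewrite <- E2, Hfg; reflexivity).
  rewrite Fa, Ka in A1. rewrite Fb, Kb in B1, B2.
  assert (X : n1 * pb (hone,1) = 0) by lia. apply Z.mul_eq_0 in X. destruct X as [X|X]; [subst n1; lia|]. rewrite X in B2. lia.
Qed.

Ltac peq := repeat apply (f_equal2 pair); unfold Z.pred, Z.succ; try ring.

Definition Cz (c : Z) : G := ((0,0,c),0).

Lemma L1_gpow s c n : gpow (Lgrp L1 s) ge (gi s (lab_S L1 s) (lab_T L1 s)) (Cz c) n = Cz (n * c).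
Proof. pose proof (sd_grp _ _ _ (lab_haut L1 s)) as Gp. induction n using Z.peano_ind.
  - reflexivity.
  - rewrite gpow_succ, IHn by exact Gp. rewrite L1_q. unfold Cz. cbn [qmul bil B0 fst snd]. peq.
  - rewrite gpow_pred, IHn by exact Gp.
    assert (Ei : gi s (lab_S L1 s) (lab_T L1 s) (Cz c) = Cz (-c)).
    { unfold Cz. cbn [gi]. rewrite iterZ_id by (apply L1_S || apply L1_T). unfold hinv. rewrite hpow_eq. peq. }
    rewrite Ei. rewrite L1_q. unfold Cz. cbn [qmul bil B0 fst snd]. peq.
Qed.

Lemma L1_central s z : 0 < s -> Lgrp L1 s z ((1,0,0),0) = Lgrp L1 s ((1,0,0),0) z ->
  Lgrp L1 s z ((0,1,0),0) = Lgrp L1 s ((0,1,0),0) z -> exists c n, z = ((0,0,c),n).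
Proof. intros Hs E1 E2. rewrite !L1_q in E1, E2. destruct z as [[[a b] c] n]. cbn [qmul bil B0] in E1, E2.
  pose proof (f_equal (fun x => hz (fst x)) E1) as F1. pose proof (f_equal (fun x => hz (fst x)) E2) as F2.
  cbn [hz fst] in F1, F2. exists c, n. assert (Xa : s * a = 0) by lia. assert (Xb : s * b = 0) by lia.
  apply Z.mul_eq_0 in Xa. apply Z.mul_eq_0 in Xb. assert (a = 0) by lia. assert (b = 0) by lia. subst. reflexivity. Qed.

Lemma L1_r_eq_half r s f g : 0 < r -> 0 < s ->
  (forall x y, f (Lgrp L1 r x y) = Lgrp L1 s (f x) (f y)) -> (forall y, f (g y) = y) ->
  exists c, f (Cz 1) = Cz c /\ (s | r * c).
Proof. intros Hr Hs Hf Hfg.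
  assert (Cc : forall x, Lgrp L1 r (Cz 1) x = Lgrp L1 r x (Cz 1)).
  { intro x. rewrite !L1_q. destruct x as [[[a b] c] n]. unfold Cz. cbn [qmul bil B0 fst snd]. peq. }
  assert (Cf : forall y, Lgrp L1 s (f (Cz 1)) y = Lgrp L1 s y (f (Cz 1))).
  { intro y. rewrite <- (Hfg y), <- !Hf, Cc. reflexivity. }
  destruct (L1_central s (f (Cz 1)) Hs (Cf _) (Cf _)) as [c [n0 Ez]].
  set (m := Lgrp L1 r). set (m' := Lgrp L1 s).
  assert (Rel : m ((1,0,0),0) ((0,1,0),0) = m (gpow m ge (gi r (lab_S L1 r) (lab_T L1 r)) (Cz 1) r) (m ((0,1,0),0) ((1,0,0),0))).
  { unfold m. rewrite L1_gpow. rewrite !L1_q. unfold Cz. cbn [qmul bil B0 fst snd]. peq. }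
  apply (f_equal f) in Rel. unfold m in Rel. rewrite !Hf in Rel.
  rewrite (grp_hom_pow (Lgrp L1 r) ge (gi r (lab_S L1 r) (lab_T L1 r)) (Lgrp L1 s) ge (gi s (lab_S L1 s) (lab_T L1 s)) f (Cz 1) r (sd_grp _ _ _ (lab_haut L1 r)) (sd_grp _ _ _ (lab_haut L1 s)) Hf) in Rel.
  rewrite Ez in Rel.
  assert (Gz : gpow (Lgrp L1 s) ge (gi s (lab_S L1 s) (lab_T L1 s)) ((0,0,c),n0) r = ((0,0,r*c), r*n0)).
  { clear -Hs. pose proof (sd_grp _ _ _ (lab_haut L1 s)) as Gp. induction r using Z.peano_ind.
    - cbn. unfold hone. peq.
    - rewrite gpow_succ, IHr by exact Gp. rewrite L1_q. cbn [qmul bil B0 fst snd]. peq.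
    - rewrite gpow_pred, IHr by exact Gp. rewrite L1_q.
      cbn [gi]. rewrite iterZ_id by (apply L1_S || apply L1_T). unfold hinv. rewrite hpow_eq.
      cbn [qmul bil B0 fst snd]. peq. }
  rewrite Gz in Rel. rewrite !L1_q in Rel.
  destruct (f ((1,0,0),0)) as [[[x1 x2] x3] m1]. destruct (f ((0,1,0),0)) as [[[y1 y2] y3] m2].
  cbn in Rel. injection Rel. intros R4 R3 R2 R1.
  assert (n0 = 0) by nia. subst n0.
  exists c. split; [exact Ez|]. exists (x1*y2 - x2*y1). nia.
Qed.

Lemma L1_L1 r s : 0 < r -> 0 < s -> iso (Lgrp L1 r) (Lgrp L1 s) -> r = s.
Proof. intros Hr Hs [f [Hf [g [Hgf Hfg]]]].
  assert (Hg : forall x y, g (Lgrp L1 s x y) = Lgrp L1 r (g x) (g y)).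
  { intros x y. rewrite <- (Hfg x), <- (Hfg y), <- Hf, !Hgf. reflexivity. }
  destruct (L1_r_eq_half r s f g Hr Hs Hf Hfg) as [c [Ec Dc]].
  destruct (L1_r_eq_half s r g f Hs Hr Hg Hgf) as [c' [Ec' Dc']].
  assert (Cc : Cz (c' * c) = Cz 1).
  { rewrite <- (Hfg (Cz 1)), Ec'. replace (Cz c') with (Cz (c' * 1)) by (f_equal; ring). rewrite <- (L1_gpow r 1 c').
    rewrite (grp_hom_pow (Lgrp L1 r) ge (gi r (lab_S L1 r) (lab_T L1 r)) (Lgrp L1 s) ge (gi s (lab_S L1 s) (lab_T L1 s)) f (Cz 1) c' (sd_grp _ _ _ (lab_haut L1 r)) (sd_grp _ _ _ (lab_haut L1 s)) Hf).
    rewrite Ec, L1_gpow. reflexivity. }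
  unfold Cz in Cc. injection Cc. intro E0.
  assert (H : c = 1 \/ c = -1) by (apply (Z.eq_mul_1 c c'); rewrite Z.mul_comm; exact E0).
  assert (E : c' = 1 \/ c' = -1) by (apply (Z.eq_mul_1 c' c); exact E0).
  assert (D1 : (s | r)).
  { destruct H as [-> | ->]; [rewrite Z.mul_1_r in Dc; exact Dc|]. apply Z.divide_opp_r.
    replace (- r) with (r * -1) by ring. exact Dc. }
  assert (D2 : (r | s)).
  { destruct E as [-> | ->]; [rewrite Z.mul_1_r in Dc'; exact Dc'|]. apply Z.divide_opp_r.
    replace (- s) with (s * -1) by ring. exact Dc'. }
  apply Z.divide_antisym_nonneg; lia || auto.
Qed.

Lemma center_gen s z : 0 < s -> (forall y, hmul s z y = hmul s y z) -> z = (0,0,hz z).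
Proof. intros Hs C. pose proof (C al) as C1. pose proof (C be) as C2. dH z. unfold al, be in *. rewrite !hmul_eq in C1, C2.
  pose proof (f_equal hz C1) as F1. pose proof (f_equal hz C2) as F2. cbn [hz] in F1, F2.
  assert (Xa : s * a = 0) by lia. assert (Xb : s * b = 0) by lia.
  apply Z.mul_eq_0 in Xa. apply Z.mul_eq_0 in Xb. cbn. f_equal. f_equal; lia. Qed.

Lemma ga_central r x : hmul r ga x = hmul r x ga.
Proof. dH x. unfold ga. hsimpl. teq; ring. Qed.

Lemma comm_rel r s A e : hhom r s A -> A ga = (0,0,e) ->
  s * (hx (A al) * hy (A be) - hy (A al) * hx (A be)) = r * e.
Proof. intros HA Hg.
  assert (E : hmul r al be = hmul r (hpow r ga r) (hmul r be al)) by (unfold al, be, ga; hsimpl; teq; ring).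
  apply (f_equal A) in E. rewrite !HA, (hom_pow r s A ga r HA), Hg in E.
  destruct (A al) as [[x1 x2] x3]. destruct (A be) as [[y1 y2] y3]. rewrite !hpow_eq, !hmul_eq in E. cbn [hx hy].
  pose proof (f_equal hz E) as F. cbn [hz] in F. lia. Qed.

Lemma Heis r s A B : 0 < r -> 0 < s -> hhom r s A -> hhom s r B -> (forall x, B (A x) = x) -> (forall y, A (B y) = y) ->
  r = s /\ exists c, A ga = (0,0,c) /\ (c = 1 \/ c = -1) /\ hx (A al) * hy (A be) - hy (A al) * hx (A be) = c.
Proof. intros Hr Hs HA HB HBA HAB.
  assert (CA : A ga = (0,0,hz (A ga))).
  { apply (center_gen s); auto. intro y. rewrite <- (HAB y), <- !HA, ga_central. reflexivity. }
  assert (CB : B ga = (0,0,hz (B ga))).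
  { apply (center_gen r); auto. intro y. rewrite <- (HBA y), <- !HB, ga_central. reflexivity. }
  set (c := hz (A ga)) in *. set (c' := hz (B ga)) in *.
  assert (Ecc : c * c' = 1).
  { pose proof (HAB ga) as E. rewrite CB in E.
    replace (0,0,c') with (hpow r ga c') in E by (unfold ga; rewrite hpow_eq; teq; ring).
    rewrite (hom_pow r s A ga c' HA), CA in E. rewrite hpow_eq in E. unfold ga in E.
    pose proof (f_equal hz E) as F. cbn [hz] in F. lia. }
  pose proof (comm_rel r s A c HA CA) as R1. pose proof (comm_rel s r B c' HB CB) as R2.
  set (dX := hx (A al) * hy (A be) - hy (A al) * hx (A be)) in *.
  set (dY := hx (B al) * hy (B be) - hy (B al) * hx (B be)) in *.
  assert (Hc : c = 1 \/ c = -1) by (apply (Z.eq_mul_1 c c'); exact Ecc).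
  assert (Hc' : c' = 1 \/ c' = -1) by (apply (Z.eq_mul_1 c' c); lia).
  assert (Hdd : dX * dY = 1).
  { apply (Z.mul_reg_l _ _ (r*s)); [nia|].
    transitivity ((s*dX) * (r*dY)); [ring|]. rewrite R1, R2.
    transitivity (r * s * (c * c')); [ring|]. rewrite Ecc. ring. }
  assert (Hd : dX = 1 \/ dX = -1) by (apply (Z.eq_mul_1 dX dY); exact Hdd).
  assert (r = s /\ dX = c) by (destruct Hc as [Ec|Ec]; destruct Hd as [Ed|Ed]; rewrite Ec, Ed in R1; split; lia).
  destruct H as [Hrs Hdc]. split; [exact Hrs|]. exists c. split; [exact CA|]. split; [exact Hc|exact Hdc].
Qed.

Lemma snd_hom i r j s f : (forall x y, f (Lgrp i r x y) = Lgrp j s (f x) (f y)) ->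
  forall x y, snd (f (Lgrp i r x y)) = snd (f x) + snd (f y).
Proof. intros Hf x y. rewrite Hf. destruct (f x) as [h n]. destruct (f y) as [h' n']. reflexivity. Qed.

Lemma structure i j r s : i <> L1 -> j <> L1 -> 0 < r -> 0 < s -> iso (Lgrp i r) (Lgrp j s) ->
  r = s /\ exists A h0 e c, hhom r r A /\ A ga = (0,0,c) /\ (c = 1 \/ c = -1) /\
    hx (A al) * hy (A be) - hy (A al) * hx (A be) = c /\ (e = 1 \/ e = -1) /\
    forall h, hmul r h0 (iterZ (lab_S j r) (lab_T j r) e (A h)) = hmul r (A (lab_S i r h)) h0.
Proof. intros Hi Hj Hr Hs [f [Hf [g [Hgf Hfg]]]].
  assert (Hg : forall x y, g (Lgrp j s x y) = Lgrp i r (g x) (g y)).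
  { intros x y. rewrite <- (Hfg x), <- (Hfg y), <- Hf, !Hgf. reflexivity. }
  pose proof (lab_haut i r) as Hli. pose proof (lab_haut j s) as Hlj.
  set (p2 := fun x => snd (f x)). set (q2 := fun x => snd (g x)).
  assert (Fp : forall h n, snd (f (h,n)) = n * snd (f (hone,1))).
  { intros h n. pose proof (hom_Z_form r _ _ p2 Hli (snd_hom i r j s f Hf) h n) as E.
    pose proof (kills i r p2 Hi Hr (snd_hom i r j s f Hf) h) as K. unfold p2 in E, K. rewrite E, K. ring. }
  assert (Fq : forall h n, snd (g (h,n)) = n * snd (g (hone,1))).
  { intros h n. pose proof (hom_Z_form s _ _ q2 Hlj (snd_hom j s i r g Hg) h n) as E.
    pose proof (kills j s q2 Hj Hs (snd_hom j s i r g Hg) h) as K. unfold q2 in E, K. rewrite E, K. ring. }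
  set (e := snd (f (hone,1))). set (e' := snd (g (hone,1))).
  set (h0 := fst (f (hone,1))).
  assert (Ef1 : f (hone,1) = (h0, e)) by (unfold h0, e; destruct (f (hone,1)); reflexivity).
  assert (Hee : e * e' = 1).
  { pose proof (Hgf (hone,1)) as E. rewrite Ef1 in E. apply (f_equal snd) in E. rewrite Fq in E. cbn in E. lia. }
  assert (He : e = 1 \/ e = -1) by (apply (Z.eq_mul_1 e e'); exact Hee).
  set (A := fun h => fst (f (h,0))). set (B := fun h => fst (g (h,0))).
  assert (EA : forall h, f (h,0) = (A h, 0)).
  { intro h. unfold A. pose proof (Fp h 0) as E. destruct (f (h,0)). cbn in *. rewrite E. reflexivity. }
  assert (EB : forall h, g (h,0) = (B h, 0)).
  { intro h. unfold B. pose proof (Fq h 0) as E. destruct (g (h,0)). cbn in *. rewrite E. reflexivity. }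
  assert (HA : hhom r s A).
  { intros x y. pose proof (Hf (x,0) (y,0)) as E. rewrite !EA in E. unfold Lgrp in E. cbn [sdmul iterZ] in E.
    rewrite EA in E. apply (f_equal fst) in E. exact E. }
  assert (HB : hhom s r B).
  { intros x y. pose proof (Hg (x,0) (y,0)) as E. rewrite !EB in E. unfold Lgrp in E. cbn [sdmul iterZ] in E.
    rewrite EB in E. apply (f_equal fst) in E. exact E. }
  assert (HBA : forall x, B (A x) = x).
  { intro x. pose proof (Hgf (x,0)) as E. rewrite EA, EB in E. injection E. auto. }
  assert (HAB : forall y, A (B y) = y).
  { intro y. pose proof (Hfg (y,0)) as E. rewrite EB, EA in E. injection E. auto. }
  destruct (Heis r s A B Hr Hs HA HB HBA HAB) as [Hrs [c [Hc1 [Hc2 Hc3]]]].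
  subst s. split; [reflexivity|]. exists A, h0, e, c. repeat split; auto.
  intro h. pose proof (conj_delta r (lab_S i r) (lab_T i r) h) as E. apply (f_equal f) in E.
  change (sdmul r (lab_S i r) (lab_T i r)) with (Lgrp i r) in E.
  rewrite !Hf, Ef1, !EA in E. unfold Lgrp in E. cbn [sdmul iterZ] in E. apply (f_equal fst) in E. exact E.
Qed.

Lemma lab_eq_dec (i j : lab) : {i = j} + {i <> j}.
Proof. decide equality. Qed.

Definition REL (i j : lab) (r : Z) : Prop :=
  exists A h0 e c, hhom r r A /\ A ga = (0,0,c) /\ (c = 1 \/ c = -1) /\
    hx (A al) * hy (A be) - hy (A al) * hx (A be) = c /\ (e = 1 \/ e = -1) /\
    forall h, hmul r h0 (iterZ (lab_S j r) (lab_T j r) e (A h)) = hmul r (A (lab_S i r h)) h0.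

Ltac derive H :=
  match type of H with
  | REL ?i ?j ?r =>
    destruct H as [A [h0 [e [c [HA [Ag [Hc [Hd [He R]]]]]]]]];
    pose proof (R al) as Ra; pose proof (R be) as Rb; clear R;
    assert (Sa : lab_S i r al = lab_u i r) by (rewrite lab_S_eq; apply phi_al);
    assert (Sb : lab_S i r be = lab_v i r) by (rewrite lab_S_eq; apply phi_be);
    rewrite Sa in Ra; rewrite Sb in Rb; clear Sa Sb; cbn [lab_u lab_v] in Ra, Rb;
    rewrite (hom_decomp r r A _ _ _ HA) in Ra; rewrite (hom_decomp r r A _ _ _ HA) in Rb;
    destruct (A al) as [[x1 x2] x3]; destruct (A be) as [[y1 y2] y3];
    rewrite Ag in Ra, Rb; cbn [hx hy] in Hd;
    destruct h0 as [[p q] z];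
    destruct He as [He | He]; subst e;
    [ rewrite !iterZ_1, (lab_S_eq j r) in Ra, Rb | rewrite !iterZ_m1, (lab_T_eq j r) in Ra, Rb ];
    cbn [lab_u lab_v] in Ra, Rb; unfold inv_u, inv_v in Ra, Rb; cbn [hx hy hz] in Ra, Rb;
    repeat (rewrite ?phi_eq, ?hmul_eq, ?hpow_eq in Ra; cbn [hz] in Ra);
    repeat (rewrite ?phi_eq, ?hmul_eq, ?hpow_eq in Rb; cbn [hz] in Rb);
    pose proof (f_equal hx Ra) as Ra1; pose proof (f_equal hy Ra) as Ra2; pose proof (f_equal hz Ra) as Ra3;
    pose proof (f_equal hx Rb) as Rb1; pose proof (f_equal hy Rb) as Rb2; pose proof (f_equal hz Rb) as Rb3;
    cbn [hx hy hz] in Ra1, Ra2, Ra3, Rb1, Rb2, Rb3; clear Ra Rb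
  end.

Ltac cleanD := rewrite ?D_0, ?D_1, ?D_m1 in *.

Ltac solve_y y x1 x2 := first [ assert (y = x1) by lia | assert (y = -x1) by lia | assert (y = x2) by lia
  | assert (y = - x2) by lia | assert (y = x1 - x2) by lia | assert (y = x2 - x1) by lia
  | assert (y = x1 + x2) by lia | assert (y = -x1-x2) by lia ]; subst y.

Ltac lin_kill := cleanD;
  match goal with Hd : ?x1 * ?y2 - ?x2 * ?y1 = _ |- _ =>
  solve_y y1 x1 x2; solve_y y2 x1 x2;
  assert (x1 = 0) by lia; assert (x2 = 0) by lia; subst; lia end.

Ltac par x := let k := fresh "k" in destruct (Z.Even_or_Odd x) as [[k ->]|[k ->]].

Ltac par_kill Hev := cleanD; destruct Hev as [rho ->];
  match goal with Hd : ?x1 * ?y2 - ?x2 * ?y1 = _, Hc : _ \/ _ |- _ =>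
  destruct Hc as [-> | ->]; par x1; par x2; par y1; par y2; lia end.

Lemma res3 x : exists a, x = 3*a \/ x = 3*a+1 \/ x = 3*a+2.
Proof. exists (x/3). pose proof (Z_div_mod_eq_full x 3). pose proof (Z.mod_pos_bound x 3). lia. Qed.

Ltac m3 x := let a := fresh "a" in let E := fresh "E" in
  destruct (res3 x) as [a [E|[E|E]]]; subst x.

Ltac mod3_kill Hdv := cleanD; destruct Hdv as [rho ->];
  match goal with Hd : ?x1 * ?y2 - ?x2 * ?y1 = _, Hc : _ \/ _ |- _ =>
  solve_y y1 x1 x2; solve_y y2 x1 x2;
  destruct Hc as [-> | ->]; m3 x1; m3 x2; lia end.

Lemma test3 r : (3 | r) -> REL L3 L3p r -> False.
Proof. intros Hdv H. derive H; mod3_kill Hdv. Qed.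
Lemma test4 r : (3 | r) -> REL L3p L3 r -> False.
Proof. intros Hdv H. derive H; mod3_kill Hdv. Qed.
Lemma test5 r : Z.Even r -> REL L4 L4p r -> False.
Proof. intros Hev H. derive H; par_kill Hev. Qed.
Lemma test6 r : Z.Even r -> REL L4p L4 r -> False.
Proof. intros Hev H. derive H; par_kill Hev. Qed.
Lemma test7 r : Z.Even r -> REL L2p L2 r -> False.
Proof. intros Hev H. derive H; par_kill Hev. Qed.

Ltac kill_any := first [ lin_kill
  | match goal with Hev : Z.Even _ |- _ => par_kill Hev end
  | match goal with Hdv : (3 | _) |- _ => mod3_kill Hdv end ].

Lemma part2 i j r s : lab_valid i r -> lab_valid j s -> iso (Lgrp i r) (Lgrp j s) -> i = j /\ r = s.
Proof. intros Vi Vj I.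
  pose proof Vi as [Hr Pi]. pose proof Vj as [Hs Pj].
  destruct (lab_eq_dec i L1) as [Ei|Ei]; destruct (lab_eq_dec j L1) as [Ej|Ej].
  - subst. split; [reflexivity|]. apply (L1_L1 r s Hr Hs I).
  - subst i. exfalso. apply (not_iso_L1 j s r Ej Hs (iso_sym _ _ I)).
  - subst j. exfalso. apply (not_iso_L1 i r s Ei Hr I).
  - destruct (structure i j r s Ei Ej Hr Hs I) as [Hrs Rel]. subst s. split; [|reflexivity].
    change (REL i j r) in Rel.
    destruct i; try congruence; destruct j; try congruence; try reflexivity;
      cbn in Pi, Pj; exfalso; derive Rel; kill_any.
Qed.

Close Scope Z_scope.

Theorem proposition4p3 :
  (* the L^i_r, L^{j,+}_r are discrete oscillator groups *)
  (forall (i : lab) (r : Z), lab_valid i r -> osc_data r (lab_S i r) (lab_T i r)) /\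
  (* they are pairwise non-isomorphic *)
  (forall (i j : lab) (r s : Z), lab_valid i r -> lab_valid j s ->
     iso (Lgrp i r) (Lgrp j s) -> i = j /\ r = s) /\
  (* every discrete oscillator group is isomorphic to one of them *)
  (forall (r : Z) (S T : H -> H), osc_data r S T ->
     exists (i : lab) (s : Z), lab_valid i s /\ iso (sdmul r S T) (Lgrp i s)) /\
  (* precise classification *)
  (forall (r k l : Z) (S T : H -> H),
     (0 < r)%Z -> haut r S T -> S ga = ga ->
     (* (i) *)
     (S al = (1, 0, k)%Z -> S be = (0, 1, l)%Z ->
        iso (sdmul r S T) (Lgrp L1 (Z.gcd (Z.gcd r k) l))) /\
     (* (ii) *)
     (S al = (-1, 0, k)%Z -> S be = (0, -1, l)%Z ->
        ((Z.Odd r \/ (Z.Even k /\ Z.Even l)) -> iso (sdmul r S T) (Lgrp L2 r)) /\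
        (~ (Z.Odd r \/ (Z.Even k /\ Z.Even l)) -> iso (sdmul r S T) (Lgrp L2p r))) /\
     (* (iii) *)
     (S al = (0, 1, k)%Z -> S be = (-1, -1, l)%Z ->
        ((~ (3 | r)%Z \/ k mod 3 = l mod 3)%Z -> iso (sdmul r S T) (Lgrp L3 r)) /\
        (~ (~ (3 | r)%Z \/ k mod 3 = l mod 3)%Z -> iso (sdmul r S T) (Lgrp L3p r))) /\
     (* (iv) *)
     (S al = (0, 1, k)%Z -> S be = (-1, 0, l)%Z ->
        ((Z.Odd r \/ k mod 2 = l mod 2)%Z -> iso (sdmul r S T) (Lgrp L4 r)) /\
        (~ (Z.Odd r \/ k mod 2 = l mod 2)%Z -> iso (sdmul r S T) (Lgrp L4p r))) /\
     (* (v) *)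
     (S al = (1, 1, k)%Z -> S be = (-1, 0, l)%Z ->
        iso (sdmul r S T) (Lgrp L6 r))).
Proof.
  split; [exact lab_osc|]. split; [exact part2|]. split.
  { intros r S T Ho. exact (part3 r S T Ho). }
  intros r k l S T Hr Ha Hg. split; [|split; [|split; [|split]]].
  - intros E1 E2. apply (case_i r k l S T); auto.
  - intros E1 E2. apply (case_ii r k l S T); auto.
  - intros E1 E2. apply (case_iii r k l S T); auto.
  - intros E1 E2. apply (case_iv r k l S T); auto.
  - intros E1 E2. apply (case_v r k l S T); auto.
Qed.
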